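(* Let $f:\mathbb{R}^n\to\mathbb{R}$ be $\mathcal{C}^2$ and let $\bar x$ be a nondegenerate critical point of $f$ of Morse index $1$, with $f(\bar x)=c$. Then for every sufficiently small $\theta>0$ there is $\epsilon_0>0$ (depending on $\theta$) such that for every $\epsilon\in(0,\epsilon_0)$: (1) the set $\{x: f(x)\le c-\epsilon\}\cap\mathring{\mathbb{B}}(\bar x,\theta)$ has exactly two path connected components; and (2) there exist points $\tilde x,\tilde y$ lying in distinct path components of this set such that $|\tilde x-\tilde y|$ equals the distance between these two components.
   Context: A critical point $\bar x$ of a $\mathcal{C}^2$ function is nondegenerate if the Hessian $\nabla^2 f(\bar x)$ is invertible; its Morse index is the number of negative eigenvalues of $\nabla^2 f(\bar x)$. $\mathring{\mathbb{B}}(\bar x,\theta)$ denotes the open Euclidean ball of radius $\theta$ about $\bar x$. The distance between two sets $A,B$ is $\inf\{|a-b|: a\in A, b\in B\}$. *)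

(* Defs.v *)
From mathcomp Require Import ssreflect ssrfun ssrbool eqtype ssrnat seq fintype bigop.
From Stdlib Require Import Reals.
Open Scope R_scope.

Definition vec (n : nat) := 'I_n -> R.
Definition mat (n : nat) := 'I_n -> 'I_n -> R.

Definition vadd {n} (x y : vec n) : vec n := fun i => x i + y i.
Definition vsub {n} (x y : vec n) : vec n := fun i => x i - y i.
Definition vscale {n} (a : R) (x : vec n) : vec n := fun i => a * x i.
Definition vzero {n} : vec n := fun _ => 0.

Definition dot {n} (x y : vec n) : R := \big[Rplus/0]_(i < n) (x i * y i).
Definition vnorm {n} (x : vec n) : R := sqrt (dot x x).
Definition vdist {n} (x y : vec n) : R := vnorm (vsub x y).

Definition open_ball {n} (xbar : vec n) (theta : R) : vec n -> Prop :=
  fun x => vdist x xbar < theta.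

Definition mvmul {n} (A : mat n) (v : vec n) : vec n :=
  fun i => \big[Rplus/0]_(j < n) (A i j * v j).
Definition mmul {n} (A B : mat n) : mat n :=
  fun i k => \big[Rplus/0]_(j < n) (A i j * B j k).
Definition mid {n} : mat n := fun i j => if i == j then 1 else 0.

Definition invertible {n} (A : mat n) : Prop :=
  exists B : mat n, mmul A B = mid /\ mmul B A = mid.

Definition has_gradient_at {n} (f : vec n -> R) (x g : vec n) : Prop :=
  forall eps, 0 < eps -> exists delta, 0 < delta /\
    forall h : vec n, vnorm h < delta ->
      Rabs (f (vadd x h) - f x - dot g h) <= eps * vnorm h.

Definition has_jacobian_at {n} (F : vec n -> vec n) (x : vec n) (J : mat n) : Prop :=
  forall eps, 0 < eps -> exists delta, 0 < delta /\
    forall h : vec n, vnorm h < delta ->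
      vnorm (vsub (vsub (F (vadd x h)) (F x)) (mvmul J h)) <= eps * vnorm h.

Definition mat_continuous {n} (H : vec n -> mat n) : Prop :=
  forall x eps, 0 < eps -> exists delta, 0 < delta /\
    forall y, vdist y x < delta -> forall i j, Rabs (H y i j - H x i j) < eps.

Definition C2_with {n} (f : vec n -> R) (grad : vec n -> vec n)
    (hess : vec n -> mat n) : Prop :=
  (forall x, has_gradient_at f x (grad x)) /\
  (forall x, has_jacobian_at grad x (hess x)) /\
  mat_continuous hess.

Definition lin_indep {n k} (vs : 'I_k -> vec n) : Prop :=
  forall c : 'I_k -> R,
    (forall j, \big[Rplus/0]_(i < k) (c i * vs i j) = 0) -> forall i, c i = 0.

Definition neg_eig_count_ge {n} (A : mat n) (k : nat) : Prop :=
  exists vs : 'I_k -> vec n, lin_indep vs /\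
    forall i, exists lam, lam < 0 /\ mvmul A (vs i) = vscale lam (vs i).

(* Number of negative eigenvalues counted with multiplicity
   (for symmetric A, geometric = algebraic multiplicity). *)
Definition morse_index {n} (A : mat n) (k : nat) : Prop :=
  neg_eig_count_ge A k /\ ~ neg_eig_count_ge A k.+1.

Definition path_in {n} (S : vec n -> Prop) (x y : vec n) : Prop :=
  exists gamma : R -> vec n,
    gamma 0 = x /\ gamma 1 = y /\
    (forall t, 0 <= t <= 1 -> S (gamma t)) /\
    (forall t, 0 <= t <= 1 -> forall eps, 0 < eps -> exists delta, 0 < delta /\
       forall s, 0 <= s <= 1 -> Rabs (s - t) < delta -> vdist (gamma s) (gamma t) < eps).

Definition path_component {n} (S : vec n -> Prop) (x : vec n) : vec n -> Prop :=
  fun y => S x /\ path_in S x y.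

Definition exactly_two_path_components {n} (S : vec n -> Prop) : Prop :=
  exists a b, S a /\ S b /\ ~ path_in S a b /\
    forall x, S x -> path_in S a x \/ path_in S b x.

Definition set_distance {n} (A B : vec n -> Prop) (d : R) : Prop :=
  (forall a b, A a -> B b -> d <= vdist a b) /\
  (forall d', (forall a b, A a -> B b -> d' <= vdist a b) -> d' <= d).

(* Main.v *)
Require Import Defs.
From HB Require Import structures.
From mathcomp Require Import all_boot all_order all_algebra.
From mathcomp Require Import all_classical all_reals all_analysis.
From mathcomp Require Import Rstruct Rstruct_topology.
From Stdlib Require Import Reals Lra Psatz FunctionalExtensionality.
Open Scope R_scope.
Set Implicit Arguments. Unset Strict Implicit.


Lemma sumR_add n (F G : 'I_n -> R) :
  \big[Rplus/0]_(i < n) (F i + G i) = \big[Rplus/0]_(i < n) F i + \big[Rplus/0]_(i < n) G i.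
Proof. by rewrite big_split. Qed.

Lemma sumR_scal n a (F : 'I_n -> R) :
  \big[Rplus/0]_(i < n) (a * F i) = a * \big[Rplus/0]_(i < n) F i.
Proof. by rewrite big_distrr. Qed.

Lemma sumR_le n (F G : 'I_n -> R) : (forall i, F i <= G i) ->
  \big[Rplus/0]_(i < n) F i <= \big[Rplus/0]_(i < n) G i.
Proof.
move=> H; apply: (big_ind2 (fun a b => a <= b)); [lra | move=> *; lra | move=> i _; exact: H].
Qed.

Lemma sumR_ge0 n (F : 'I_n -> R) : (forall i, 0 <= F i) -> 0 <= \big[Rplus/0]_(i < n) F i.
Proof. move=> H; apply: (big_ind (fun a => 0 <= a)); [lra | move=> *; lra | move=> i _; exact: H]. Qed.

Lemma sumR_abs n (F : 'I_n -> R) : Rabs (\big[Rplus/0]_(i < n) F i) <= \big[Rplus/0]_(i < n) Rabs (F i).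
Proof.
apply: (big_ind2 (fun a b => Rabs a <= b)); first by rewrite Rabs_R0; lra.
  move=> a b c d H1 H2; apply: Rle_trans (Rabs_triang _ _) _; lra.
by move=> i _; lra.
Qed.

Lemma sumR_0 n : \big[Rplus/0]_(i < n) (0:R) = 0.
Proof. by rewrite big1. Qed.

Lemma sumR_ext n (F G : 'I_n -> R) : (forall i, F i = G i) ->
  \big[Rplus/0]_(i < n) F i = \big[Rplus/0]_(i < n) G i.
Proof. by move=> H; apply: eq_bigr => i _; exact: H. Qed.

Lemma sumR_term n (F : 'I_n -> R) i : (forall j, 0 <= F j) -> F i <= \big[Rplus/0]_(j < n) F j.
Proof.
move=> H.
have -> : \big[Rplus/0]_(j < n) F j = F i + \big[Rplus/0]_(j < n | j != i) F j by rewrite (bigD1 i).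
have : 0 <= \big[Rplus/0]_(j < n | j != i) F j.
  apply: (big_ind (fun a => 0 <= a)); [lra | move=> *; lra | move=> j _; exact: H].
lra.
Qed.

Lemma sumR_swap n (F : 'I_n -> 'I_n -> R) :
  \big[Rplus/0]_(i < n) \big[Rplus/0]_(j < n) F i j = \big[Rplus/0]_(j < n) \big[Rplus/0]_(i < n) F i j.
Proof. by rewrite exchange_big. Qed.

Lemma vext n (x y : vec n) : (forall i, x i = y i) -> x = y.
Proof. move=> H; apply: functional_extensionality; exact: H. Qed.

Lemma dot_comm n (x y : vec n) : dot x y = dot y x.
Proof. by apply: sumR_ext => i; ring. Qed.

Lemma dot_addl n (x y z : vec n) : dot (vadd x y) z = dot x z + dot y z.
Proof. rewrite /dot -sumR_add; apply: sumR_ext => i; rewrite /vadd; ring. Qed.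

Lemma dot_addr n (x y z : vec n) : dot z (vadd x y) = dot z x + dot z y.
Proof. by rewrite dot_comm dot_addl !(dot_comm z). Qed.

Lemma dot_subl n (x y z : vec n) : dot (vsub x y) z = dot x z - dot y z.
Proof.
rewrite /dot.
have -> : \big[Rplus/0]_(i < n) (vsub x y i * z i) = \big[Rplus/0]_(i < n) (x i * z i + (-1) * (y i * z i)).
  by apply: sumR_ext => i; rewrite /vsub; ring.
rewrite sumR_add sumR_scal; ring.
Qed.

Lemma dot_subr n (x y z : vec n) : dot z (vsub x y) = dot z x - dot z y.
Proof. by rewrite dot_comm dot_subl !(dot_comm z). Qed.

Lemma dot_scalel n a (x y : vec n) : dot (vscale a x) y = a * dot x y.
Proof. rewrite /dot -sumR_scal; apply: sumR_ext => i; rewrite /vscale; ring. Qed.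

Lemma dot_scaler n a (x y : vec n) : dot y (vscale a x) = a * dot y x.
Proof. by rewrite dot_comm dot_scalel dot_comm. Qed.

Lemma dot_zerol n (x : vec n) : dot vzero x = 0.
Proof. rewrite /dot big1 // => i _; rewrite /vzero; ring. Qed.

Lemma dot_zeror n (x : vec n) : dot x vzero = 0.
Proof. by rewrite dot_comm dot_zerol. Qed.

Lemma dot_ge0 n (x : vec n) : 0 <= dot x x.
Proof. apply: sumR_ge0 => i; nra. Qed.

Lemma dot_coord n (x : vec n) i : x i * x i <= dot x x.
Proof. rewrite /dot; apply: (@sumR_term n (fun j => x j * x j) i) => j; nra. Qed.

Lemma dot_eq0 n (x : vec n) : dot x x = 0 -> x = vzero.
Proof.
move=> H; apply: vext => i; rewrite /vzero.
have := dot_coord x i; have := Rle_0_sqr (x i); rewrite /Rsqr => h1 h2; nra.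
Qed.

Lemma CS n (x y : vec n) : dot x y * dot x y <= dot x x * dot y y.
Proof.
have H : forall t, 0 <= dot x x - 2 * t * dot x y + t * t * dot y y.
  move=> t; have := dot_ge0 (vsub x (vscale t y)).
  rewrite !dot_subl !dot_subr !dot_scalel !dot_scaler (dot_comm y x); lra.
have Hx := dot_ge0 x; have Hy := dot_ge0 y.
case: (Req_dec (dot y y) 0) => Hy0.
  have Hxy : dot x y = 0.
    case: (Req_dec (dot x y) 0) => // Hn.
    have := H ((dot x x + 1) / (2 * dot x y)); rewrite Hy0.
    have -> : 2 * ((dot x x + 1) / (2 * dot x y)) * dot x y = dot x x + 1 by field.
    lra.
  rewrite Hxy Hy0; lra.
have := H (dot x y / dot y y).
have -> : dot x x - 2 * (dot x y / dot y y) * dot x y + dot x y / dot y y * (dot x y / dot y y) * dot y y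
  = (dot x x * dot y y - dot x y * dot x y) / dot y y by field.
move=> h; have Hyp : 0 < dot y y by lra.
have := Rmult_le_compat_l (dot y y) _ _ (Rlt_le _ _ Hyp) h.
have -> : dot y y * ((dot x x * dot y y - dot x y * dot x y) / dot y y) = dot x x * dot y y - dot x y * dot x y by field; lra.
lra.
Qed.

Lemma vnorm_ge0 n (x : vec n) : 0 <= vnorm x.
Proof. exact: sqrt_pos. Qed.

Lemma vnorm_sq n (x : vec n) : vnorm x * vnorm x = dot x x.
Proof. rewrite /vnorm sqrt_sqrt //; exact: dot_ge0. Qed.

Lemma CS_abs n (x y : vec n) : Rabs (dot x y) <= vnorm x * vnorm y.
Proof.
apply: Rsqr_incr_0_var; last by apply: Rmult_le_pos; apply: vnorm_ge0.
rewrite /Rsqr.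
have -> : Rabs (dot x y) * Rabs (dot x y) = dot x y * dot x y.
  by rewrite -Rabs_mult Rabs_right //; apply: Rle_ge; nra.
have -> : vnorm x * vnorm y * (vnorm x * vnorm y) = (vnorm x * vnorm x) * (vnorm y * vnorm y) by ring.
rewrite !vnorm_sq; exact: CS.
Qed.

Lemma sqrt_lt_iff a b : 0 <= a -> 0 < b -> (sqrt a < b <-> a < b * b).
Proof.
move=> ha hb; split => h.
  have h1 := sqrt_pos a.
  have := sqrt_sqrt a ha; nra.
rewrite -(sqrt_square b); last lra.
apply: sqrt_lt_1_alt; lra.
Qed.

Lemma vnorm_lt n (x : vec n) b : 0 < b -> (vnorm x < b <-> dot x x < b * b).
Proof. move=> hb; apply: sqrt_lt_iff => //; exact: dot_ge0. Qed.

Lemma vnorm_le n (x : vec n) b : 0 <= b -> (vnorm x <= b <-> dot x x <= b * b).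
Proof.
move=> hb; split => h.
  rewrite -vnorm_sq; have := vnorm_ge0 x; nra.
rewrite -(sqrt_square b) //; exact: sqrt_le_1_alt.
Qed.

Lemma vnorm_scale n a (x : vec n) : vnorm (vscale a x) = Rabs a * vnorm x.
Proof.
rewrite /vnorm dot_scalel dot_scaler.
have -> : a * (a * dot x x) = (a * a) * dot x x by ring.
rewrite sqrt_mult_alt; last nra.
by rewrite -Rsqr_def sqrt_Rsqr_abs.
Qed.

Lemma vnorm_triang n (x y : vec n) : vnorm (vadd x y) <= vnorm x + vnorm y.
Proof.
apply/vnorm_le; first by have := vnorm_ge0 x; have := vnorm_ge0 y; lra.
rewrite !dot_addl !dot_addr (dot_comm y x).
have := CS_abs x y; have := vnorm_sq x; have := vnorm_sq y.
move=> h1 h2 h3; have := Rle_abs (dot x y); nra.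
Qed.

Lemma vnorm_coord n (x : vec n) i : Rabs (x i) <= vnorm x.
Proof.
apply: Rsqr_incr_0_var; last exact: vnorm_ge0.
rewrite /Rsqr vnorm_sq -Rabs_mult Rabs_right; first exact: dot_coord.
apply: Rle_ge; nra.
Qed.


Lemma mvmul_add n (A : mat n) x y : mvmul A (vadd x y) = vadd (mvmul A x) (mvmul A y).
Proof. apply: vext => i; rewrite /mvmul /vadd -sumR_add; apply: sumR_ext => j; ring. Qed.

Lemma mvmul_scale n (A : mat n) a x : mvmul A (vscale a x) = vscale a (mvmul A x).
Proof. apply: vext => i; rewrite /mvmul /vscale -sumR_scal; apply: sumR_ext => j; ring. Qed.

Lemma mvmul_sub n (A : mat n) x y : mvmul A (vsub x y) = vsub (mvmul A x) (mvmul A y).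
Proof.
apply: vext => i; rewrite /mvmul /vsub.
have -> : \big[Rplus/0]_(j < n) (A i j * (x j - y j)) = \big[Rplus/0]_(j < n) (A i j * x j + (-1) * (A i j * y j)).
  by apply: sumR_ext => j; ring.
rewrite sumR_add sumR_scal; ring.
Qed.

Lemma mvmul_zero n (A : mat n) : mvmul A vzero = vzero.
Proof. apply: vext => i; rewrite /mvmul /vzero big1 // => j _; ring. Qed.

Lemma sum_one n : \big[Rplus/0]_(i < n) (1:R) = INR n.
Proof.
rewrite big_const_ord; elim: n => [|n IH] //=.
rewrite IH; case: n {IH} => [|n] /=; ring.
Qed.

Definition absv {n} (x : vec n) : vec n := fun i => Rabs (x i).
Definition ones {n} : vec n := fun _ => 1.

Lemma sum_abs_le n (d : vec n) : \big[Rplus/0]_(j < n) Rabs (d j) <= sqrt (INR n) * vnorm d.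
Proof.
have -> : \big[Rplus/0]_(j < n) Rabs (d j) = dot (absv d) ones.
  by rewrite /dot; apply: sumR_ext => j; rewrite /absv /ones; ring.
apply: Rle_trans (Rle_abs _) _.
apply: Rle_trans (CS_abs _ _) _.
have -> : vnorm (absv d) = vnorm d.
  rewrite /vnorm; f_equal; rewrite /dot; apply: sumR_ext => j; rewrite /absv -Rabs_mult Rabs_right //.
  apply: Rle_ge; intros; nra.
have -> : vnorm (@ones n) = sqrt (INR n).
  rewrite /vnorm; f_equal; rewrite /dot -sum_one; apply: sumR_ext => j; rewrite /ones; ring.
rewrite Rmult_comm; lra.
Qed.

Lemma dot_mvmul n (A : mat n) d e :
  dot (mvmul A d) e = \big[Rplus/0]_(i < n) \big[Rplus/0]_(j < n) (A i j * d j * e i).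
Proof.
rewrite /dot /mvmul; apply: sumR_ext => i.
rewrite Rmult_comm -sumR_scal; apply: sumR_ext => j; ring.
Qed.

Lemma bilin_bound n (A : mat n) eta d e : (forall i j, Rabs (A i j) <= eta) ->
  Rabs (dot (mvmul A d) e) <= eta * INR n * vnorm d * vnorm e.
Proof.
move=> HA.
have eta0 : 0 <= eta \/ n = O.
  case: n A HA d e => [|n] A HA d e; first by right.
  left; have := HA ord0 ord0; have := Rabs_pos (A ord0 ord0); lra.
rewrite dot_mvmul; apply: Rle_trans (sumR_abs _) _.
apply: (@Rle_trans _ (\big[Rplus/0]_(i < n) \big[Rplus/0]_(j < n) (eta * Rabs (d j) * Rabs (e i))) _).
  apply: sumR_le => i; apply: Rle_trans (sumR_abs _) _; apply: sumR_le => j.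
  rewrite !Rabs_mult; have := HA i j; have := Rabs_pos (d j); have := Rabs_pos (e i); move=> h1 h2 h3; apply: Rmult_le_compat_r => //; apply: Rmult_le_compat_r => //.
have -> : \big[Rplus/0]_(i < n) \big[Rplus/0]_(j < n) (eta * Rabs (d j) * Rabs (e i))
  = eta * (\big[Rplus/0]_(j < n) Rabs (d j)) * (\big[Rplus/0]_(i < n) Rabs (e i)).
  transitivity (\big[Rplus/0]_(i < n) ((eta * \big[Rplus/0]_(j < n) Rabs (d j)) * Rabs (e i))).
    apply: sumR_ext => i; rewrite -sumR_scal Rmult_comm -sumR_scal; apply: sumR_ext => j; ring.
  by rewrite sumR_scal.
case: eta0 => [eta0|En]; last by subst n; rewrite !big_ord0 /=; lra.
have h1 := sum_abs_le d; have h2 := sum_abs_le e.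
have s1 := sumR_ge0 (fun j => Rabs_pos (d j)).
have s2 := sumR_ge0 (fun j => Rabs_pos (e j)).
have hn : sqrt (INR n) * sqrt (INR n) = INR n by apply: sqrt_sqrt; apply: pos_INR.
have := sqrt_pos (INR n); have := vnorm_ge0 d; have := vnorm_ge0 e.
move=> *.
apply: (@Rle_trans _ (eta * (sqrt (INR n) * vnorm d) * (sqrt (INR n) * vnorm e)) _).
  apply: Rmult_le_compat; try nra.
apply: Req_le; transitivity (eta * (sqrt (INR n) * sqrt (INR n)) * vnorm d * vnorm e); [ring | by rewrite hn].
Qed.



Lemma mvmul_diff n (A B : mat n) d :
  mvmul (fun i j => A i j - B i j) d = vsub (mvmul A d) (mvmul B d).
Proof.
apply: vext => i; rewrite /mvmul /vsub.
have -> : \big[Rplus/0]_(j < n) ((A i j - B i j) * d j) = \big[Rplus/0]_(j < n) (A i j * d j + (-1) * (B i j * d j)).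
  by apply: sumR_ext => j; ring.
rewrite sumR_add sumR_scal; ring.
Qed.

Lemma bilin_diff n (A B : mat n) eta d e : (forall i j, Rabs (A i j - B i j) <= eta) ->
  Rabs (dot (mvmul A d) e - dot (mvmul B d) e) <= eta * INR n * vnorm d * vnorm e.
Proof.
move=> H; rewrite -dot_subl -mvmul_diff; exact: bilin_bound.
Qed.

Lemma mvmul_mmul n (A B : mat n) x : mvmul (mmul A B) x = mvmul A (mvmul B x).
Proof.
apply: vext => i; rewrite /mvmul /mmul.
have -> : \big[Rplus/0]_(j < n) (\big[Rplus/0]_(k < n) (A i k * B k j) * x j)
  = \big[Rplus/0]_(j < n) \big[Rplus/0]_(k < n) (A i k * B k j * x j).
  apply: sumR_ext => j; rewrite Rmult_comm -sumR_scal; apply: sumR_ext => k; ring.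
rewrite sumR_swap; apply: sumR_ext => k.
rewrite -sumR_scal; apply: sumR_ext => j; ring.
Qed.

Lemma mvmul_mid n (x : vec n) : mvmul mid x = x.
Proof.
apply: vext => i; rewrite /mvmul /mid (bigD1 i) //= eqxx big1 /=.
  ring.
by move=> j /negbTE; rewrite eq_sym => ->; ring.
Qed.

Lemma invertible_ker n (A : mat n) x : invertible A -> mvmul A x = vzero -> x = vzero.
Proof.
move=> [B [_ HBA]] Hx.
by rewrite -(mvmul_mid x) -HBA mvmul_mmul Hx mvmul_zero.
Qed.


Lemma dpl_of (phi : R -> R) t l :
  (forall e, 0 < e -> exists del, 0 < del /\ forall h, Rabs h < del ->
     Rabs (phi (t + h) - phi t - h * l) <= e * Rabs h) -> derivable_pt_lim phi t l.
Proof.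
move=> H eps Heps.
have [del [Hdel Hh]] := H (eps / 2) ltac:(lra).
exists (mkposreal del Hdel) => h hn hl /=.
have hp : 0 < Rabs h by apply: Rabs_pos_lt.
have -> : (phi (t + h) - phi t) / h - l = (phi (t + h) - phi t - h * l) / h by field.
rewrite /Rdiv Rabs_mult Rabs_inv.
apply: (Rmult_lt_reg_r (Rabs h)) => //.
rewrite Rmult_assoc Rinv_l; last lra.
have := Hh h hl; intros; nra.
Qed.

Lemma dpl_quad p q r a x :
  derivable_pt_lim (fun y => p + q * (y - a) + r * ((y - a) * (y - a))) x (q + 2 * r * (x - a)).
Proof.
apply: dpl_of => e he.
exists (e / (Rabs r + 1)); split.
  have := Rabs_pos r; move=> ?; apply: Rdiv_lt_0_compat; lra.
move=> h hh.
have -> : p + q * (x + h - a) + r * ((x + h - a) * (x + h - a)) - (p + q * (x - a) + r * ((x - a) * (x - a))) - h * (q + 2 * r * (x - a)) = r * h * h by ring.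
rewrite !Rabs_mult.
have hr := Rabs_pos r; have hp := Rabs_pos h.
have : Rabs h * (Rabs r + 1) < e.
  have := Rmult_lt_compat_r (Rabs r + 1) _ _ ltac:(lra) hh.
  rewrite /Rdiv Rmult_assoc Rinv_l; lra.
intros; nra.
Qed.

Definition line {n} (x d : vec n) (t : R) : vec n := vadd x (vscale t d).

Lemma line_shift n (x d : vec n) t h : vadd (line x d t) (vscale h d) = line x d (t + h).
Proof. apply: vext => i; rewrite /line /vadd /vscale; ring. Qed.

Lemma deriv_f n (f : vec n -> R) (grad : vec n -> vec n) x d t :
  (forall y, has_gradient_at f y (grad y)) ->
  derivable_pt_lim (fun s => f (line x d s)) t (dot (grad (line x d t)) d).
Proof.
move=> Hg; apply: dpl_of => e he.
have hd := vnorm_ge0 d.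
have [del [hdel Hdel]] := Hg (line x d t) (e / (vnorm d + 1)) ltac:(apply: Rdiv_lt_0_compat; lra).
exists (del / (vnorm d + 1)); split; first by apply: Rdiv_lt_0_compat; lra.
move=> h hh.
have hh' : Rabs h * (vnorm d + 1) < del.
  have := Rmult_lt_compat_r (vnorm d + 1) _ _ ltac:(lra) hh.
  rewrite /Rdiv Rmult_assoc Rinv_l; lra.
have hv : vnorm (vscale h d) < del.
  rewrite vnorm_scale; have := Rabs_pos h; intros; nra.
have := Hdel _ hv.
rewrite line_shift dot_scaler vnorm_scale.
move=> H; apply: (Rle_trans _ _ _ H).
have : e / (vnorm d + 1) * vnorm d <= e.
  apply: (Rmult_le_reg_r (vnorm d + 1)); first lra.
  rewrite /Rdiv; field_simplify; last lra.
  nra.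
have := Rabs_pos h; intros; nra.
Qed.

Lemma deriv_grad n (grad : vec n -> vec n) (hess : vec n -> mat n) x d a t :
  (forall y, has_jacobian_at grad y (hess y)) ->
  derivable_pt_lim (fun s => dot (grad (line x d s)) a) t (dot (mvmul (hess (line x d t)) d) a).
Proof.
move=> Hg; apply: dpl_of => e he.
have hd := vnorm_ge0 d; have ha := vnorm_ge0 a.
set K := (vnorm d + 1) * (vnorm a + 1).
have hK : 0 < K by rewrite /K; nra.
have [del [hdel Hdel]] := Hg (line x d t) (e / K) ltac:(apply: Rdiv_lt_0_compat; lra).
exists (del / (vnorm d + 1)); split; first by apply: Rdiv_lt_0_compat; lra.
move=> h hh.
have hh' : Rabs h * (vnorm d + 1) < del.
  have := Rmult_lt_compat_r (vnorm d + 1) _ _ ltac:(lra) hh.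
  rewrite /Rdiv Rmult_assoc Rinv_l; lra.
have hv : vnorm (vscale h d) < del.
  rewrite vnorm_scale; have := Rabs_pos h; intros; nra.
have H := Hdel _ hv.
rewrite line_shift in H.
set w := vsub _ _ in H.
have -> : dot (grad (line x d (t + h))) a - dot (grad (line x d t)) a -
    h * dot (mvmul (hess (line x d t)) d) a = dot w a.
  by rewrite /w !dot_subl mvmul_scale dot_scalel.
apply: Rle_trans (CS_abs _ _) _.
rewrite vnorm_scale in H.
have hw := vnorm_ge0 w; have hh0 := Rabs_pos h.
apply: (@Rle_trans _ (e / K * (Rabs h * vnorm d) * vnorm a)); first by apply: Rmult_le_compat_r.
have : e / K * (vnorm d * vnorm a) <= e.
  have hda : vnorm d * vnorm a <= K by rewrite /K; nra.
  have he' : 0 <= e / K by apply: Rlt_le; apply: Rdiv_lt_0_compat; lra.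
  apply: Rle_trans (Rmult_le_compat_l _ _ _ he' hda) _.
  right; field; lra.
have : 0 <= e / K by apply: Rlt_le; apply: Rdiv_lt_0_compat; lra.
intros; nra.
Qed.

Lemma mono (phi phi1 : R -> R) a b :
  a <= b -> (forall x, a <= x <= b -> derivable_pt_lim phi x (phi1 x)) ->
  (forall x, a <= x <= b -> 0 <= phi1 x) -> phi a <= phi b.
Proof.
move=> hab hd hp.
case: (Rle_lt_or_eq_dec _ _ hab) => [hlt|->]; last lra.
have [c [hc hc']] := MVT_cor2 phi phi1 _ _ hlt hd.
have := hp c ltac:(lra); nra.
Qed.

Lemma mvt_bound (phi phi1 : R -> R) a b K :
  a <= b -> (forall x, a <= x <= b -> derivable_pt_lim phi x (phi1 x)) ->
  (forall x, a <= x <= b -> Rabs (phi1 x) <= K) -> Rabs (phi b - phi a) <= K * (b - a).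
Proof.
move=> hab hd hp.
case: (Rle_lt_or_eq_dec _ _ hab) => [hlt|->].
  have [c [hc hc']] := MVT_cor2 phi phi1 _ _ hlt hd.
  rewrite hc Rabs_mult (Rabs_right (b - a)); last lra.
  apply: Rmult_le_compat_r; [lra | apply: hp; lra].
have -> : phi b - phi b = 0 by ring.
rewrite Rabs_R0; have := hp b ltac:(lra); have := Rabs_pos (phi1 b); intros; nra.
Qed.

Lemma taylor_lower (psi psi1 psi2 : R -> R) a b m :
  a <= b ->
  (forall x, a <= x <= b -> derivable_pt_lim psi x (psi1 x)) ->
  (forall x, a <= x <= b -> derivable_pt_lim psi1 x (psi2 x)) ->
  (forall x, a <= x <= b -> m <= psi2 x) ->
  psi a + psi1 a * (b - a) + m / 2 * ((b - a) * (b - a)) <= psi b.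
Proof.
move=> hab h1 h2 hm.
pose chi1 := fun x => psi1 x - (psi1 a + m * (x - a) + 0 * ((x - a) * (x - a))).
pose chi := fun x => psi x - (psi a + psi1 a * (x - a) + m / 2 * ((x - a) * (x - a))).
have d1 : forall x, a <= x <= b -> derivable_pt_lim chi1 x (psi2 x - (m + 2 * 0 * (x - a))).
  move=> x hx; apply: (derivable_pt_lim_minus psi1); [exact: h2 | exact: dpl_quad].
have d0 : forall x, a <= x <= b -> derivable_pt_lim chi x (chi1 x).
  move=> x hx.
  have -> : chi1 x = psi1 x - (psi1 a + 2 * (m / 2) * (x - a)) by rewrite /chi1; field.
  apply: (derivable_pt_lim_minus psi); [exact: h1 | exact: dpl_quad].
have p1 : forall x, a <= x <= b -> 0 <= chi1 x.
  move=> x hx.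
  have : chi1 a <= chi1 x.
    apply: (mono (phi1 := fun y => psi2 y - (m + 2 * 0 * (y - a)))); first lra.
      move=> y hy; apply: d1; lra.
    move=> y hy; have := hm y ltac:(lra); lra.
  have -> : chi1 a = 0 by rewrite /chi1; ring.
  done.
have : chi a <= chi b by apply: (mono (phi1 := chi1)).
rewrite /chi; lra.
Qed.

Lemma taylor_upper (psi psi1 psi2 : R -> R) a b M :
  a <= b ->
  (forall x, a <= x <= b -> derivable_pt_lim psi x (psi1 x)) ->
  (forall x, a <= x <= b -> derivable_pt_lim psi1 x (psi2 x)) ->
  (forall x, a <= x <= b -> psi2 x <= M) ->
  psi b <= psi a + psi1 a * (b - a) + M / 2 * ((b - a) * (b - a)).
Proof.
move=> hab h1 h2 hm.
have := taylor_lower (psi := fun x => - psi x) (psi1 := fun x => - psi1 x) (psi2 := fun x => - psi2 x) (m := - M) hab.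
move=> H.
have : - psi a + - psi1 a * (b - a) + - M / 2 * ((b - a) * (b - a)) <= - psi b.
  apply: H.
  - move=> x hx; exact: (derivable_pt_lim_opp psi x (psi1 x) (h1 x hx)).
  - move=> x hx; exact: (derivable_pt_lim_opp psi1 x (psi2 x) (h2 x hx)).
  - move=> x hx; have := hm x hx; lra.
have -> : - M / 2 = - (M / 2) by field.
lra.
Qed.

Lemma qconvex (psi psi1 psi2 : R -> R) a b t :
  a <= t <= b ->
  (forall x, a <= x <= b -> derivable_pt_lim psi x (psi1 x)) ->
  (forall x, a <= x <= b -> derivable_pt_lim psi1 x (psi2 x)) ->
  (forall x, a <= x <= b -> 0 <= psi2 x) ->
  psi t <= Rmax (psi a) (psi b).
Proof.
move=> ht h1 h2 hp.
apply: Rnot_lt_le => hc.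
have ha : psi a < psi t by apply: Rle_lt_trans (Rmax_l _ _) hc.
have hb : psi b < psi t by apply: Rle_lt_trans (Rmax_r _ _) hc.
have hat : a < t by case: (Req_dec a t) => [e|?]; [subst; lra | lra].
have htb : t < b by case: (Req_dec t b) => [e|?]; [subst; lra | lra].
have [c1 [e1 hc1]] := MVT_cor2 psi psi1 _ _ hat ltac:(move=> x hx; apply: h1; lra).
have [c2 [e2 hc2]] := MVT_cor2 psi psi1 _ _ htb ltac:(move=> x hx; apply: h1; lra).
have p1 : 0 < psi1 c1.
  have : 0 < psi1 c1 * (t - a) by lra.
  move=> h; apply: (Rmult_lt_reg_r (t - a)); lra.
have p2 : psi1 c2 < 0.
  have : psi1 c2 * (b - t) < 0 by lra.
  move=> h; apply: (Rmult_lt_reg_r (b - t)); lra.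
have hc12 : c1 < c2 by lra.
have [c3 [e3 hc3]] := MVT_cor2 psi1 psi2 _ _ hc12 ltac:(move=> x hx; apply: h2; lra).
have := hp c3 ltac:(lra); nra.
Qed.


Lemma line0 n (x d : vec n) : line x d 0 = x.
Proof. apply: vext => i; rewrite /line /vadd /vscale; ring. Qed.

Lemma line_comm n (x a b : vec n) s t : line (line x a s) b t = line (line x b t) a s.
Proof. apply: vext => i; rewrite /line /vadd /vscale; ring. Qed.

Lemma vsub_line2 n (x a b : vec n) s t : vsub (line (line x a s) b t) x = vadd (vscale s a) (vscale t b).
Proof. apply: vext => i; rewrite /line /vadd /vscale /vsub; ring. Qed.

Lemma vsub_line n (x d : vec n) t : vsub (line x d t) x = vscale t d.
Proof. apply: vext => i; rewrite /line /vadd /vscale /vsub; ring. Qed.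

Lemma Rdiv_le_0_compat a b : 0 <= a -> 0 < b -> 0 <= a / b.
Proof. move=> ha hb; apply: Rmult_le_pos => //; apply: Rlt_le; exact: Rinv_0_lt_compat. Qed.

Lemma small_zero D C : 0 <= C -> (forall eta, 0 < eta -> Rabs D <= eta * C) -> D = 0.
Proof.
move=> hC H; case: (Req_dec D 0) => // hD.
have hD' : 0 < Rabs D by apply: Rabs_pos_lt.
have := H (Rabs D / (2 * (C + 1))) ltac:(apply: Rdiv_lt_0_compat; lra).
have -> : Rabs D / (2 * (C + 1)) * C = Rabs D * (C / (2 * (C + 1))) by field; lra.
have : C / (2 * (C + 1)) < 1.
  apply: (Rmult_lt_reg_r (2 * (C + 1))); first lra.
  rewrite /Rdiv Rmult_assoc Rinv_l; lra.
have : 0 <= C / (2 * (C + 1)) by apply: Rdiv_le_0_compat; lra.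
intros; nra.
Qed.

Section Sym.
Variables (n : nat) (f : vec n -> R) (grad : vec n -> vec n) (hess : vec n -> mat n).
Hypothesis HC2 : C2_with f grad hess.

Lemma second_diff x a b s : 0 < s -> exists sg tau, 0 <= sg <= s /\ 0 <= tau <= s /\
  f (line (line x a s) b s) - f (line x a s) - f (line x b s) + f x =
  s * s * dot (mvmul (hess (line (line x a sg) b tau)) b) a.
Proof.
move=> hs.
have [Hg [Hj _]] := HC2.
pose g := fun sg => f (line (line x b s) a sg) - f (line x a sg).
pose g1 := fun sg => dot (grad (line (line x b s) a sg)) a - dot (grad (line x a sg)) a.
have dg : forall sg, 0 <= sg <= s -> derivable_pt_lim g sg (g1 sg).
  move=> sg _; apply: (derivable_pt_lim_minus (fun t => f (line (line x b s) a t)) (fun t => f (line x a t))); exact: deriv_f.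
have [s0 [e0 h0]] := MVT_cor2 g g1 _ _ hs dg.
pose k := fun t => dot (grad (line (line x a s0) b t)) a.
pose k1 := fun t => dot (mvmul (hess (line (line x a s0) b t)) b) a.
have dk : forall t, 0 <= t <= s -> derivable_pt_lim k t (k1 t).
  move=> t _; exact: deriv_grad.
have [t0 [e1 h1]] := MVT_cor2 k k1 _ _ hs dk.
exists s0, t0; split; first lra; split; first lra.
have E1 : g s - g 0 = f (line (line x a s) b s) - f (line x a s) - f (line x b s) + f x.
  by rewrite /g !line0 (line_comm x b a); ring.
have E2 : g1 s0 = k s - k 0.
  by rewrite /g1 /k line0 (line_comm x a b).
rewrite -E1 e0 E2 e1 /k1; ring.
Qed.

Lemma hess_sym x a b : dot (mvmul (hess x) b) a = dot (mvmul (hess x) a) b.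
Proof.
have [Hg [Hj Hc]] := HC2.
apply: Rminus_diag_uniq.
apply: (small_zero (C := 2 * INR n * vnorm a * vnorm b)).
  have := pos_INR n; have := vnorm_ge0 a; have := vnorm_ge0 b.
  move=> *; apply: Rmult_le_pos; [apply: Rmult_le_pos|]; try lra; nra.
move=> eta heta.
have [del [hdel Hdel]] := Hc x eta heta.
have ha := vnorm_ge0 a; have hb := vnorm_ge0 b.
set s := del / (2 * (vnorm a + vnorm b + 1)).
have hs : 0 < s by apply: Rdiv_lt_0_compat; lra.
have hsd : s * (vnorm a + vnorm b) < del.
  rewrite /s.
  have -> : del / (2 * (vnorm a + vnorm b + 1)) * (vnorm a + vnorm b)
     = del * ((vnorm a + vnorm b) / (2 * (vnorm a + vnorm b + 1))) by field; lra.
  have : (vnorm a + vnorm b) / (2 * (vnorm a + vnorm b + 1)) < 1.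
    apply: (Rmult_lt_reg_r (2 * (vnorm a + vnorm b + 1))); first lra.
    rewrite /Rdiv Rmult_assoc Rinv_l; lra.
  have : 0 <= (vnorm a + vnorm b) / (2 * (vnorm a + vnorm b + 1)) by apply: Rdiv_le_0_compat; lra.
  intros; nra.
have close : forall x' y' sg tau, 0 <= sg <= s -> 0 <= tau <= s ->
    vdist (line (line x x' sg) y' tau) x <= s * (vnorm x' + vnorm y').
  move=> x' y' sg tau h1 h2; rewrite /vdist vsub_line2.
  apply: Rle_trans (vnorm_triang _ _) _.
  rewrite !vnorm_scale !Rabs_right; try lra.
  have := vnorm_ge0 x'; have := vnorm_ge0 y'; intros; nra.
have [s1 [t1 [h1 [h2 E1]]]] := second_diff x a b hs.
have [s2 [t2 [h3 [h4 E2]]]] := second_diff x b a hs.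
have Eq : dot (mvmul (hess (line (line x a s1) b t1)) b) a = dot (mvmul (hess (line (line x b s2) a t2)) a) b.
  apply: (Rmult_eq_reg_l (s * s)); last nra.
  rewrite -E1 -E2 (line_comm x a b); ring.
have B1 : Rabs (dot (mvmul (hess (line (line x a s1) b t1)) b) a - dot (mvmul (hess x) b) a) <= eta * INR n * vnorm b * vnorm a.
  apply: bilin_diff => i j; apply: Rlt_le; apply: Hdel.
  have := close a b s1 t1 h1 h2; lra.
have B2 : Rabs (dot (mvmul (hess (line (line x b s2) a t2)) a) b - dot (mvmul (hess x) a) b) <= eta * INR n * vnorm a * vnorm b.
  apply: bilin_diff => i j; apply: Rlt_le; apply: Hdel.
  have := close b a s2 t2 h3 h4; lra.
rewrite Eq in B1.
have := Rabs_triang (dot (mvmul (hess (line (line x b s2) a t2)) a) b - dot (mvmul (hess x) b) a)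
    (- (dot (mvmul (hess (line (line x b s2) a t2)) a) b - dot (mvmul (hess x) a) b)).
rewrite Rabs_Ropp.
have -> : dot (mvmul (hess (line (line x b s2) a t2)) a) b - dot (mvmul (hess x) b) a +
    - (dot (mvmul (hess (line (line x b s2) a t2)) a) b - dot (mvmul (hess x) a) b) =
    dot (mvmul (hess x) a) b - dot (mvmul (hess x) b) a by ring.
rewrite Rabs_minus_sym.
have -> : eta * (2 * INR n * vnorm a * vnorm b) = eta * INR n * vnorm b * vnorm a + eta * INR n * vnorm a * vnorm b by ring.
lra.
Qed.

End Sym.


Lemma vdist_self n (x : vec n) : vdist x x = 0.
Proof.
rewrite /vdist /vnorm.
have -> : dot (vsub x x) (vsub x x) = 0.
  rewrite /dot big1 // => i _; rewrite /vsub; ring.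
exact: sqrt_0.
Qed.

Lemma vdist_sym n (x y : vec n) : vdist x y = vdist y x.
Proof.
rewrite /vdist /vnorm; f_equal; rewrite /dot; apply: sumR_ext => i; rewrite /vsub; ring.
Qed.

Section Paths.
Variables (n : nat) (S : vec n -> Prop).

Lemma path_refl p : S p -> path_in S p p.
Proof.
move=> Sp; exists (fun _ => p); split => //; split => //; split => // t ht eps he.
exists 1; split; first lra; move=> s hs _; rewrite vdist_self; lra.
Qed.

Lemma seg_path p q : (forall t, 0 <= t <= 1 -> S (line p (vsub q p) t)) -> path_in S p q.
Proof.
move=> H; exists (line p (vsub q p)); split; first by rewrite line0.
split; first by apply: vext => i; rewrite /line /vadd /vscale /vsub; ring.
split => // t ht eps he.
have hd := vnorm_ge0 (vsub q p).
exists (eps / (vnorm (vsub q p) + 1)); split; first by apply: Rdiv_lt_0_compat; lra.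
move=> s hs hst; rewrite /vdist.
have -> : vsub (line p (vsub q p) s) (line p (vsub q p) t) = vscale (s - t) (vsub q p).
  by apply: vext => i; rewrite /line /vadd /vscale /vsub; ring.
rewrite vnorm_scale.
have : Rabs (s - t) * (vnorm (vsub q p) + 1) < eps.
  have := Rmult_lt_compat_r (vnorm (vsub q p) + 1) _ _ ltac:(lra) hst.
  rewrite /Rdiv Rmult_assoc Rinv_l; lra.
have := Rabs_pos (s - t); intros; nra.
Qed.

Lemma path_rev p q : path_in S p q -> path_in S q p.
Proof.
move=> [g [g0 [g1 [gS gc]]]].
exists (fun t => g (1 - t)); split; first by rewrite Rminus_0_r.
split; first by rewrite Rminus_eq_0.
split; first by move=> t ht; apply: gS; lra.
move=> t ht eps he.
have [d [hd Hd]] := gc (1 - t) ltac:(lra) eps he.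
exists d; split => // s hs hst; apply: Hd; first lra.
have -> : 1 - s - (1 - t) = - (s - t) by ring.
by rewrite Rabs_Ropp.
Qed.

Lemma path_trans p q r : path_in S p q -> path_in S q r -> path_in S p r.
Proof.
move=> [g [g0 [g1 [gS gc]]]] [h [h0 [h1 [hS hc]]]].
pose k := fun t => if Rle_dec t (1/2) then g (2 * t) else h (2 * t - 1).
exists k; split.
  rewrite /k; case: Rle_dec => [hq1|hq1]; last lra.
  by rewrite Rmult_0_r.
split.
  rewrite /k; case: Rle_dec => [hq2|hq2]; first lra.
  by have -> : 2 * 1 - 1 = 1 by ring.
split.
  move=> t ht; rewrite /k; case: Rle_dec => hh; [apply: gS | apply: hS]; lra.
move=> t ht eps he.
case: (Rtotal_order t (1/2)) => [hlt|[heq|hgt]].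
- have [d [hd Hd]] := gc (2 * t) ltac:(lra) eps he.
  exists (Rmin (d / 2) (1/2 - t)); split.
    apply: Rmin_pos; lra.
  move=> s hs hst.
  have h1' := Rmin_l (d / 2) (1/2 - t); have h2' := Rmin_r (d / 2) (1/2 - t).
  have hs2 : s <= 1/2.
    have := Rle_abs (s - t); lra.
  rewrite /k; case: Rle_dec => [hq3|hq3]; last lra.
  case: Rle_dec => [hq4|hq4]; last lra.
  apply: Hd; first lra.
  have -> : 2 * s - 2 * t = 2 * (s - t) by ring.
  rewrite Rabs_mult Rabs_right; lra.
- subst t.
  have [d1 [hd1 Hd1]] := gc 1 ltac:(lra) eps he.
  have [d2 [hd2 Hd2]] := hc 0 ltac:(lra) eps he.
  exists (Rmin (d1 / 2) (d2 / 2)); split.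
    apply: Rmin_pos; lra.
  move=> s hs hst.
  have h1' := Rmin_l (d1 / 2) (d2 / 2); have h2' := Rmin_r (d1 / 2) (d2 / 2).
  rewrite /k; case: (Rle_dec (1/2) (1/2)) => [hq5|hq5]; last lra.
  have -> : 2 * (1/2) = 1 by field.
  case: (Rle_dec s (1/2)) => hs2.
    apply: Hd1; first lra.
    have -> : 2 * s - 1 = 2 * (s - 1/2) by field.
    rewrite Rabs_mult Rabs_right; lra.
  rewrite g1 -h0.
  apply: Hd2; first lra.
  have -> : 2 * s - 1 - 0 = 2 * (s - 1/2) by field.
  rewrite Rabs_mult Rabs_right; lra.
- have [d [hd Hd]] := hc (2 * t - 1) ltac:(lra) eps he.
  exists (Rmin (d / 2) (t - 1/2)); split.
    apply: Rmin_pos; lra.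
  move=> s hs hst.
  have h1' := Rmin_l (d / 2) (t - 1/2); have h2' := Rmin_r (d / 2) (t - 1/2).
  have hs2 : 1/2 < s.
    have := Rle_abs (t - s); rewrite Rabs_minus_sym; lra.
  rewrite /k; case: Rle_dec => [hq6|hq6]; first lra.
  case: Rle_dec => [hq7|hq7]; first lra.
  apply: Hd; first lra.
  have -> : 2 * s - 1 - (2 * t - 1) = 2 * (s - t) by ring.
  rewrite Rabs_mult Rabs_right; lra.
Qed.

End Paths.

Lemma cont_pt_of (g : R -> R) x :
  (forall eps, 0 < eps -> exists d, 0 < d /\ forall y, Rabs (y - x) < d -> Rabs (g y - g x) < eps) ->
  continuity_pt g x.
Proof.
move=> H eps he.
have [d [hd Hd]] := H eps he.
exists d; split => // y [_ hy].
exact: Hd.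
Qed.

Definition clamp (t : R) := Rmax 0 (Rmin 1 t).

Lemma clamp_in t : 0 <= clamp t <= 1.
Proof.
rewrite /clamp; split; first exact: Rmax_l.
apply: Rmax_lub; first lra; exact: Rmin_l.
Qed.

Lemma clamp_id t : 0 <= t <= 1 -> clamp t = t.
Proof. move=> ht; rewrite /clamp Rmin_right; [rewrite Rmax_right|]; lra. Qed.

Lemma clamp_lip s t : Rabs (clamp s - clamp t) <= Rabs (s - t).
Proof.
rewrite /clamp /Rmax /Rmin.
repeat case: Rle_dec; intros; rewrite /Rabs; repeat case: Rcase_abs; intros; lra.
Qed.

Lemma path_ivt n (S : vec n -> Prop) (u : vec n) (o : vec n) p q :
  dot u u = 1 ->
  (forall y, S y -> dot (vsub y o) u <> 0) ->
  path_in S p q -> 0 < dot (vsub p o) u -> 0 < dot (vsub q o) u.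
Proof.
move=> hu hS [g [g0 [g1 [gS gc]]]] hp.
apply: Rnot_le_lt => hq.
have hq' : dot (vsub q o) u < 0.
  case: (Rle_lt_or_eq_dec _ _ hq) => // e.
  by exfalso; apply: (hS q); [rewrite -g1; apply: gS; lra | ].
pose psi := fun t => - dot (vsub (g (clamp t)) o) u.
have cpsi : continuity psi.
  move=> x; apply: cont_pt_of => eps he.
  have [d [hd Hd]] := gc (clamp x) (clamp_in x) eps he.
  exists d; split => // y hy.
  have hc : Rabs (clamp y - clamp x) < d by apply: Rle_lt_trans (clamp_lip _ _) hy.
  have := Hd (clamp y) (clamp_in y) hc.
  rewrite /psi.
  have -> : - dot (vsub (g (clamp y)) o) u - - dot (vsub (g (clamp x)) o) u = - dot (vsub (g (clamp y)) (g (clamp x))) u.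
    rewrite !dot_subl; ring.
  rewrite Rabs_Ropp => h.
  apply: Rle_lt_trans (CS_abs _ _) _.
  have -> : vnorm u = 1 by rewrite /vnorm hu sqrt_1.
  rewrite Rmult_1_r; exact: h.
have h0 : psi 0 < 0 by rewrite /psi clamp_id ?g0; lra.
have h1 : 0 < psi 1 by rewrite /psi clamp_id ?g1; lra.
have [z [hz ez]] := IVT psi 0 1 cpsi ltac:(lra) h0 h1.
apply: (hS (g (clamp z))); first by apply: gS; exact: clamp_in.
rewrite /psi in ez; lra.
Qed.


Definition ccont {m} (F : vec m -> R) := forall x e, 0 < e -> exists d, 0 < d /\
  forall y, (forall i, Rabs (y i - x i) < d) -> Rabs (F y - F x) < e.

Module CptM.
Import Order.TTheory GRing.Theory Num.Theory.
Import numFieldNormedType.Exports.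

Definition rowv {m} (z : vec m) : 'rV[R]_m := @matrix.matrix_of_fun R 1 m matrix_key (fun _ j => z j).

Lemma min_attained m (F G : vec m -> R) : ccont F -> ccont G ->
  (exists z, G z <= 0) -> (exists M, forall z, G z <= 0 -> forall i, Rabs (z i) <= M) ->
  exists z, G z <= 0 /\ forall z', G z' <= 0 -> F z <= F z'.
Proof.
move=> cF cG [z0 Gz0] [M HM].
pose phi (v : 'rV[R]_m) : vec m := fun i => v ord0 i.
pose A : set 'rV[R]_m := fun v => G (phi v) <= 0.
have contc : forall H : vec m -> R, ccont H -> continuous (H \o phi).
  move=> H cH v; apply/(@cvg_ballP _ _ _ _ (nbhs_filter v)) => e /RltP e0.
  have [d [d0 Hd]] := cH (phi v) e e0.
  apply/nbhs_ballP; exists d; first exact/RltP.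
  move=> y [_ byv]; rewrite /ball /=.
  have := Hd (phi y) _.
  rewrite distrC -RabsE => Hy; apply/RltP; apply: Hy => i.
  have := byv ord0 i; rewrite /ball /= -RabsE => /RltP; rewrite Rabs_minus_sym //.
have Acl : closed A.
  move=> v clv; rewrite /A; apply/Rnot_lt_le => Gv.
  have [d [d0 Hd]] := cG (phi v) (G (phi v)) Gv.
  have [y [Ay vy]] : exists y, A y /\ ball v d y.
    have nb : nbhs v (ball v d) by apply: nbhsx_ballx; apply/RltP.
    by have [y [? ?]] := clv _ nb; exists y.
  rewrite /A in Ay.
  have [_ byv] := vy.
  have Hi : forall i, Rabs (phi y i - phi v i) < d.
    move=> i; have := byv ord0 i; rewrite /ball /= -RabsE => /RltP; rewrite Rabs_minus_sym //.
  have := Hd (phi y) Hi; move/Rabs_def2 => [? ?]; lra.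
have Abd : bounded_set A.
  exists (Rmax M 0); split; first by rewrite num_real.
  move=> x Mx w Aw /=.
  rewrite /Num.norm /= mx_normrE; apply/bigmax_leP; split.
    apply: le_trans (ltW Mx); apply/RleP; apply: Rmax_r.
  move=> [a j] _ /=; rewrite (ord1 a).
  apply: le_trans (ltW Mx); apply/RleP; rewrite -RabsE.
  apply: Rle_trans (Rmax_l _ _); exact: (HM (phi w) Aw j).
have Acp := bounded_closed_compact Abd Acl.
have phirow : forall z : vec m, phi (rowv z) = z.
  by move=> z; apply: functional_extensionality => i; rewrite /phi /= mxE.
have A0 : exists v, A v by exists (rowv z0); rewrite /A phirow.
have [c Ac Hc] := EVT_min_rV A0 Acp (continuous_subspaceT (contc F cF)).
exists (phi c); split; first by rewrite inE in Ac.
move=> z' Gz'.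
have := Hc (rowv z'); rewrite /= phirow => H1; apply/RleP; apply: H1.
by rewrite inE /A phirow.
Qed.



End CptM.
Import CptM.

Section CC.
Variable m : nat.

Lemma ccont_const a : ccont (fun _ : vec m => a).
Proof. move=> x e he; exists 1; split; first lra; move=> y _; rewrite Rminus_eq_0 Rabs_R0; lra. Qed.

Lemma ccont_coord i : ccont (fun z : vec m => z i).
Proof. move=> x e he; exists e; split => // y hy; exact: hy. Qed.

Lemma ccont_add F G : ccont F -> ccont G -> ccont (fun z : vec m => F z + G z).
Proof.
move=> hF hG x e he.
have [d1 [h1 H1]] := hF x (e / 2) ltac:(lra).
have [d2 [h2 H2]] := hG x (e / 2) ltac:(lra).
exists (Rmin d1 d2); split; first by apply: Rmin_pos.
move=> y hy.
have a1 := H1 y (fun i => Rlt_le_trans _ _ _ (hy i) (Rmin_l _ _)).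
have a2 := H2 y (fun i => Rlt_le_trans _ _ _ (hy i) (Rmin_r _ _)).
have -> : F y + G y - (F x + G x) = (F y - F x) + (G y - G x) by ring.
apply: Rle_lt_trans (Rabs_triang _ _) _; lra.
Qed.

Lemma ccont_opp F : ccont F -> ccont (fun z : vec m => - F z).
Proof.
move=> hF x e he; have [d [h H]] := hF x e he; exists d; split => // y hy.
have -> : - F y - - F x = - (F y - F x) by ring.
rewrite Rabs_Ropp; exact: H.
Qed.

Lemma ccont_sub F G : ccont F -> ccont G -> ccont (fun z : vec m => F z - G z).
Proof. move=> hF hG; exact: (ccont_add hF (ccont_opp hG)). Qed.

Lemma ccont_mul F G : ccont F -> ccont G -> ccont (fun z : vec m => F z * G z).
Proof.
move=> hF hG x e he.
set K := Rabs (F x) + Rabs (G x) + 1.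
have hK : 0 < K by rewrite /K; have := Rabs_pos (F x); have := Rabs_pos (G x); lra.
set et := Rmin 1 (e / K).
have het : 0 < et by apply: Rmin_pos; [lra | apply: Rdiv_lt_0_compat].
have het1 : et <= 1 := Rmin_l _ _.
have hetK : et * K <= e.
  have := Rmin_r 1 (e / K); rewrite -/et => h.
  have := Rmult_le_compat_r K _ _ (Rlt_le _ _ hK) h.
  rewrite /Rdiv Rmult_assoc Rinv_l; lra.
have [d1 [h1 H1]] := hF x et het.
have [d2 [h2 H2]] := hG x et het.
exists (Rmin d1 d2); split; first by apply: Rmin_pos.
move=> y hy.
have a1 := H1 y (fun i => Rlt_le_trans _ _ _ (hy i) (Rmin_l _ _)).
have a2 := H2 y (fun i => Rlt_le_trans _ _ _ (hy i) (Rmin_r _ _)).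
have -> : F y * G y - F x * G x = (F y - F x) * (G y - G x) + (F y - F x) * G x + F x * (G y - G x) by ring.
apply: Rle_lt_trans (Rabs_triang _ _) _.
apply: Rle_lt_trans (Rplus_le_compat_r _ _ _ (Rabs_triang _ _)) _.
rewrite !Rabs_mult.
have p1 := Rabs_pos (F y - F x); have p2 := Rabs_pos (G y - G x).
have p3 := Rabs_pos (F x); have p4 := Rabs_pos (G x).
have : Rabs (F y - F x) * Rabs (G y - G x) < et by nra.
have : Rabs (F y - F x) * Rabs (G x) <= et * Rabs (G x) by nra.
have : Rabs (F x) * Rabs (G y - G x) <= Rabs (F x) * et by nra.
rewrite /K in hetK; intros; nra.
Qed.

Lemma ccont_abs F : ccont F -> ccont (fun z : vec m => Rabs (F z)).
Proof.
move=> hF x e he; have [d [h H]] := hF x e he; exists d; split => // y hy.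
apply: Rle_lt_trans (Rabs_triang_inv2 _ _) _; exact: H.
Qed.

Lemma ccont_max F G : ccont F -> ccont G -> ccont (fun z : vec m => Rmax (F z) (G z)).
Proof.
move=> hF hG.
have E : forall a b, Rmax a b = (a + b + Rabs (a - b)) / 2.
  move=> a b; rewrite /Rmax /Rabs; case: Rle_dec; case: Rcase_abs; intros; field_simplify; lra.
have := ccont_mul (ccont_add (ccont_add hF hG) (ccont_abs (ccont_sub hF hG))) (ccont_const (/ 2)).
move=> h x e he; have [d [hd H]] := h x e he; exists d; split => // y hy.
rewrite !E; exact: H.
Qed.

Lemma ccont_bigsum (I : Type) (r : seq I) (F : I -> vec m -> R) :
  (forall i, ccont (F i)) -> ccont (fun z => \big[Rplus/0]_(i <- r) F i z).
Proof.
move=> H; elim: r => [|a r IH].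
  move=> x e he; exists 1; split; first lra; move=> y _; rewrite !big_nil Rminus_eq_0 Rabs_R0; lra.
move=> x e he; have [d [hd Hd]] := @ccont_add _ _ (H a) IH x e he; exists d; split => // y hy.
rewrite !big_cons; exact: Hd y hy.
Qed.

Lemma coord_bound_norm (v : vec m) d : 0 <= d -> (forall i, Rabs (v i) <= d) -> vnorm v <= sqrt (INR m) * d.
Proof.
move=> hd H; apply/vnorm_le; first by apply: Rmult_le_pos => //; exact: sqrt_pos.
have -> : sqrt (INR m) * d * (sqrt (INR m) * d) = (sqrt (INR m) * sqrt (INR m)) * (d * d) by ring.
rewrite sqrt_sqrt; last exact: pos_INR.
apply: (@Rle_trans _ (\big[Rplus/0]_(i < m) (d * d * 1))).
  apply: sumR_le => i; have := H i; rewrite /Rabs; case: Rcase_abs => ? ?; nra.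
rewrite sumR_scal sum_one; lra.
Qed.

Lemma ccont_of_econt (F : vec m -> R) :
  (forall x e, 0 < e -> exists d, 0 < d /\ forall y, vdist y x < d -> Rabs (F y - F x) < e) -> ccont F.
Proof.
move=> H x e he.
have [d [hd Hd]] := H x e he.
have hs := sqrt_pos (INR m).
exists (d / (sqrt (INR m) + 1)); split; first by apply: Rdiv_lt_0_compat; lra.
move=> y hy; apply: Hd.
have hd' : 0 <= d / (sqrt (INR m) + 1) by apply: Rlt_le; apply: Rdiv_lt_0_compat; lra.
apply: Rle_lt_trans (coord_bound_norm hd' (fun i => Rlt_le _ _ (hy i))) _.
have -> : sqrt (INR m) * (d / (sqrt (INR m) + 1)) = d * (sqrt (INR m) / (sqrt (INR m) + 1)) by field; lra.
have : sqrt (INR m) / (sqrt (INR m) + 1) < 1.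
  apply: (Rmult_lt_reg_r (sqrt (INR m) + 1)); first lra.
  rewrite /Rdiv Rmult_assoc Rinv_l; lra.
have : 0 <= sqrt (INR m) / (sqrt (INR m) + 1) by apply: Rdiv_le_0_compat; lra.
intros; nra.
Qed.
End CC.


Lemma vnorm_unit n (u : vec n) : dot u u = 1 -> vnorm u = 1.
Proof. by move=> h; rewrite /vnorm h sqrt_1. Qed.

Lemma vdist_line n (x d : vec n) t : vdist (line x d t) x = Rabs t * vnorm d.
Proof. by rewrite /vdist vsub_line vnorm_scale. Qed.

Section Core.
Variables (n : nat) (f : vec n -> R) (grad : vec n -> vec n) (hess : vec n -> mat n) (xbar : vec n) (c : R).
Hypothesis HC2 : C2_with f grad hess.
Hypothesis Hg0 : grad xbar = vzero.
Hypothesis Hfc : f xbar = c.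
Variables (u : vec n) (lam mu eta th0 : R).
Hypothesis Hu1 : dot u u = 1.
Hypothesis Hu : mvmul (hess xbar) u = vscale lam u.
Hypothesis Hlam : lam < 0.
Hypothesis Hmu : 0 < mu.
Hypothesis Hpd : forall w, dot w u = 0 -> mu * dot w w <= dot (mvmul (hess xbar) w) w.
Hypothesis Heta : 0 < eta.
Hypothesis HeN1 : eta * INR n <= - lam / 2.
Hypothesis HeN2 : eta * INR n <= mu / 8.
Hypothesis Hth0 : 0 < th0.
Hypothesis Hball : forall y, vdist y xbar < th0 -> forall i j, Rabs (hess y i j - hess xbar i j) < eta.

Definition P s w := vadd xbar (vadd (vscale s u) w).

Let Hgr : forall y, has_gradient_at f y (grad y). Proof. by case: HC2. Qed.
Let Hja : forall y, has_jacobian_at grad y (hess y). Proof. by case: HC2 => _ []. Qed.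

Lemma hess_close y d e : vdist y xbar < th0 ->
  Rabs (dot (mvmul (hess y) d) e - dot (mvmul (hess xbar) d) e) <= eta * INR n * vnorm d * vnorm e.
Proof. move=> hy; apply: bilin_diff => i j; apply: Rlt_le; exact: Hball. Qed.



Lemma hess_bounds y d e : vdist y xbar < th0 ->
  dot (mvmul (hess xbar) d) e - eta * INR n * vnorm d * vnorm e <= dot (mvmul (hess y) d) e /\
  dot (mvmul (hess y) d) e <= dot (mvmul (hess xbar) d) e + eta * INR n * vnorm d * vnorm e.
Proof.
move=> hy; have := hess_close d e hy.
move=> h; have := Rle_abs (dot (mvmul (hess y) d) e - dot (mvmul (hess xbar) d) e).
have := Rle_abs (- (dot (mvmul (hess y) d) e - dot (mvmul (hess xbar) d) e)).
rewrite Rabs_Ropp; lra.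
Qed.

Lemma Hsym a b : dot (mvmul (hess xbar) b) a = dot (mvmul (hess xbar) a) b.
Proof. exact: (hess_sym HC2). Qed.

Lemma Huu : dot (mvmul (hess xbar) u) u = lam.
Proof. by rewrite Hu dot_scalel Hu1; ring. Qed.

Lemma Huw w : dot w u = 0 -> dot (mvmul (hess xbar) u) w = 0.
Proof. by move=> h; rewrite Hu dot_scalel dot_comm h; ring. Qed.

Lemma vnu : vnorm u = 1.
Proof. exact: vnorm_unit. Qed.

Lemma P_eq s w : P s w = line (line xbar u s) w 1.
Proof. apply: vext => i; rewrite /P /line /vadd /vscale; ring. Qed.

Lemma P_sub s w : vsub (P s w) xbar = vadd (vscale s u) w.
Proof. apply: vext => i; rewrite /P /vsub /vadd /vscale; ring. Qed.

Lemma pyth s w : dot w u = 0 -> dot (vadd (vscale s u) w) (vadd (vscale s u) w) = s * s + dot w w.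
Proof.
move=> h; rewrite !dot_addl !dot_addr !dot_scalel !dot_scaler Hu1 h (dot_comm u w) h; ring.
Qed.

Lemma ball_of y r : 0 < r -> dot (vsub y xbar) (vsub y xbar) < r * r -> vdist y xbar < r.
Proof. move=> hr h; rewrite /vdist; exact/vnorm_lt. Qed.

Lemma ball_to y r : 0 < r -> vdist y xbar < r -> dot (vsub y xbar) (vsub y xbar) < r * r.
Proof. move=> hr h; exact/(vnorm_lt _ hr). Qed.

Lemma d1 p d t : derivable_pt_lim (fun s => f (line p d s)) t (dot (grad (line p d t)) d).
Proof. exact: deriv_f. Qed.
Lemma d2 p d t : derivable_pt_lim (fun s => dot (grad (line p d s)) d) t (dot (mvmul (hess (line p d t)) d) d).
Proof. exact: deriv_grad. Qed.

Lemma axis_ball s : Rabs s < th0 -> vdist (line xbar u s) xbar < th0.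
Proof. by move=> h; rewrite vdist_line vnu Rmult_1_r. Qed.

Lemma axis_upper s : 0 <= s < th0 -> f (line xbar u s) <= c + lam / 4 * (s * s).
Proof.
move=> hs.
have := taylor_upper (psi := fun t => f (line xbar u t)) (psi1 := fun t => dot (grad (line xbar u t)) u)
  (psi2 := fun t => dot (mvmul (hess (line xbar u t)) u) u) (a := 0) (b := s) (M := lam / 2) ltac:(lra)
  (fun x _ => d1 xbar u x) (fun x _ => d2 xbar u x).
rewrite line0 Hg0 dot_zerol Hfc.
have -> : s - 0 = s by ring.
move=> H; apply: Rle_trans (H _) _; last by right; field.
move=> x hx.
have := hess_bounds u u (axis_ball (s := x) ltac:(rewrite Rabs_right; lra)).
rewrite Huu vnu; lra.
Qed.

Lemma axis_lower s : 0 <= s < th0 -> c + 3 * lam / 4 * (s * s) <= f (line xbar u s).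
Proof.
move=> hs.
have := taylor_lower (psi := fun t => f (line xbar u t)) (psi1 := fun t => dot (grad (line xbar u t)) u)
  (psi2 := fun t => dot (mvmul (hess (line xbar u t)) u) u) (a := 0) (b := s) (m := 3 * lam / 2) ltac:(lra)
  (fun x _ => d1 xbar u x) (fun x _ => d2 xbar u x).
rewrite line0 Hg0 dot_zerol Hfc.
have -> : s - 0 = s by ring.
move=> H; apply: Rle_trans (H _); first by right; field.
move=> x hx.
have := hess_bounds u u (axis_ball (s := x) ltac:(rewrite Rabs_right; lra)).
rewrite Huu vnu; lra.
Qed.

Lemma grad_cross s w : 0 <= s < th0 -> dot w u = 0 ->
  Rabs (dot (grad (line xbar u s)) w) <= eta * INR n * vnorm w * s.
Proof.
move=> hs hw.
have := mvt_bound (phi := fun t => dot (grad (line xbar u t)) w)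
  (phi1 := fun t => dot (mvmul (hess (line xbar u t)) u) w) (a := 0) (b := s) (K := eta * INR n * vnorm w)
  ltac:(lra) (fun x _ => @deriv_grad _ grad hess xbar u w x Hja).
rewrite line0 Hg0 dot_zerol Rminus_0_r Rminus_0_r.
move=> H; apply: H => x hx.
have := hess_close u w (axis_ball (s := x) ltac:(rewrite Rabs_right; lra)).
by rewrite Huw // Rminus_0_r vnu Rmult_1_r.
Qed.

Lemma key_lower s w : 0 <= s -> dot w u = 0 -> s * s + dot w w < th0 * th0 ->
  c + 3 * lam / 4 * (s * s) - eta * INR n * vnorm w * s + mu / 4 * dot w w <= f (P s w).
Proof.
move=> hs hw hb.
have hww := dot_ge0 w.
have hs0 : s < th0.
  have : s * s < th0 * th0 by lra.
  move=> h; apply: Rnot_le_lt => h'; have := Rmult_le_compat _ _ _ _ (Rlt_le _ _ Hth0) (Rlt_le _ _ Hth0) h' h'; lra.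
have := taylor_lower (psi := fun t => f (line (line xbar u s) w t)) (psi1 := fun t => dot (grad (line (line xbar u s) w t)) w)
  (psi2 := fun t => dot (mvmul (hess (line (line xbar u s) w t)) w) w) (a := 0) (b := 1) (m := mu / 2 * dot w w) ltac:(lra)
  (fun x _ => d1 _ w x) (fun x _ => d2 _ w x).
rewrite line0 -P_eq.
have -> : 1 - 0 = 1 by ring.
move=> H.
have hax := axis_lower (conj hs hs0).
have hgc := grad_cross (conj hs hs0) hw.
have hgc' := Rle_abs (- dot (grad (line xbar u s)) w); rewrite Rabs_Ropp in hgc'.
have : f (line xbar u s) + dot (grad (line xbar u s)) w * 1 + mu / 2 * dot w w / 2 * (1 * 1) <= f (P s w).
  apply: H => x hx.
  have hin : vdist (line (line xbar u s) w x) xbar < th0.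
    apply: ball_of => //.
    have -> : vsub (line (line xbar u s) w x) xbar = vadd (vscale s u) (vscale x w).
      by apply: vext => i; rewrite /line /vsub /vadd /vscale; ring.
    rewrite pyth; last by rewrite dot_scalel hw; ring.
    rewrite dot_scalel dot_scaler.
    have hx2 : x * x <= 1 by nra.
    have : x * (x * dot w w) <= dot w w.
      have -> : x * (x * dot w w) = (x * x) * dot w w by ring.
      have := Rmult_le_compat_r (dot w w) _ _ (dot_ge0 w) hx2; lra.
    lra.
  have := hess_bounds w w hin.
  have := Hpd hw; have := vnorm_sq w.
  have := pos_INR n; intros; nra.
lra.
Qed.

Definition Kc := 1 + 6 * (- lam) / mu.

Lemma Kc_pos : 1 <= Kc.
Proof. rewrite /Kc; have : 0 <= 6 * - lam / mu by apply: Rdiv_le_0_compat; lra. lra. Qed.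

Lemma key_nonneg w : dot w u = 0 -> dot w w < th0 * th0 -> c <= f (P 0 w).
Proof.
move=> hw hb.
have := key_lower (s := 0) (w := w) ltac:(lra) hw ltac:(lra).
have := dot_ge0 w; intros; nra.
Qed.

Lemma key_bound s w : 0 <= s -> dot w u = 0 -> s * s + dot w w < th0 * th0 -> f (P s w) < c ->
  dot w w <= Kc * (s * s).
Proof.
move=> hs hw hb hf.
have h := key_lower hs hw hb.
have hn := vnorm_ge0 w; have hsq := vnorm_sq w.
have hi := pos_INR n.
case: (Rle_lt_dec (vnorm w) s) => hws.
  have : dot w w <= s * s by rewrite -hsq; nra.
  have : 0 <= 6 * - lam / mu * (s * s) by apply: Rmult_le_pos; [apply: Rdiv_le_0_compat; lra | nra].
  rewrite /Kc; move=> h4 h5.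
  have -> : (1 + 6 * - lam / mu) * (s * s) = s * s + 6 * - lam / mu * (s * s) by ring.
  lra.
have h1 : eta * INR n * vnorm w * s <= mu / 8 * dot w w.
  rewrite -hsq.
  have -> : eta * INR n * vnorm w * s = eta * INR n * (vnorm w * s) by ring.
  have hen := Rmult_le_pos _ _ (Rlt_le _ _ Heta) hi.
  apply: Rmult_le_compat => //.
  - nra.
  - apply: Rmult_le_compat_l => //; lra.
have h2 : mu / 8 * dot w w < 3 * (- lam) / 4 * (s * s) by lra.
have h3 : dot w w < 6 * (- lam) / mu * (s * s).
  apply: (Rmult_lt_reg_l (mu / 8)); first lra.
  have -> : mu / 8 * (6 * - lam / mu * (s * s)) = 3 * - lam / 4 * (s * s) by field; lra.
  lra.
have : 0 <= s * s by nra.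
rewrite /Kc; move=> h4.
have -> : (1 + 6 * - lam / mu) * (s * s) = s * s + 6 * - lam / mu * (s * s) by ring.
lra.
Qed.


Definition sc y := dot (vsub y xbar) u.
Definition wc y := vsub (vsub y xbar) (vscale (sc y) u).

Lemma decomp y : y = P (sc y) (wc y).
Proof. apply: vext => i; rewrite /P /wc /vsub /vadd /vscale; ring. Qed.

Lemma wc_perp y : dot (wc y) u = 0.
Proof. by rewrite /wc dot_subl dot_scalel Hu1 /sc; ring. Qed.

Lemma sc_P s w : dot w u = 0 -> sc (P s w) = s.
Proof. by move=> hw; rewrite /sc P_sub dot_addl dot_scalel Hu1 hw; ring. Qed.

Lemma P_line_u s w : P s w = line (vadd xbar w) u s.
Proof. apply: vext => i; rewrite /P /line /vadd /vscale; ring. Qed.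

Lemma P_line_w s w t : P s (vscale t w) = line (line xbar u s) w t.
Proof. apply: vext => i; rewrite /P /line /vadd /vscale; ring. Qed.

Lemma P_ball s w r : 0 < r -> dot w u = 0 -> s * s + dot w w < r * r -> vdist (P s w) xbar < r.
Proof. by move=> hr hw h; apply: ball_of => //; rewrite P_sub pyth. Qed.

Lemma concave_step w s sg : dot w u = 0 -> 0 <= s <= sg -> sg * sg + dot w w < th0 * th0 ->
  f (P s w) < c -> f (P sg w) <= f (P s w).
Proof.
move=> hw hs hb hf.
have hww := dot_ge0 w.
pose g := fun t => f (line (vadd xbar w) u t).
have := qconvex (psi := fun t => - g t) (psi1 := fun t => - dot (grad (line (vadd xbar w) u t)) u)
  (psi2 := fun t => - dot (mvmul (hess (line (vadd xbar w) u t)) u) u) (a := 0) (b := sg) (t := s) hs.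
move=> H.
have : - g s <= Rmax (- g 0) (- g sg).
  apply: H.
  - move=> x _; exact: (derivable_pt_lim_opp _ _ _ (d1 _ u x)).
  - move=> x _; exact: (derivable_pt_lim_opp _ _ _ (d2 _ u x)).
  - move=> x hx.
    have hin : vdist (line (vadd xbar w) u x) xbar < th0.
      rewrite -P_line_u; apply: P_ball => //.
      have : x * x <= sg * sg by nra.
      lra.
    have := hess_bounds u u hin; rewrite Huu vnu.
    have := Rmult_le_pos _ _ (Rlt_le _ _ Heta) (pos_INR n); lra.
rewrite /g -!P_line_u.
have hsg : 0 <= sg * sg by nra.
have hg0 : c <= f (P 0 w) by apply: key_nonneg => //; lra.
rewrite /Rmax; case: Rle_dec; lra.
Qed.

Lemma convex_step w s t : dot w u = 0 -> 0 <= t <= 1 -> s * s + dot w w < th0 * th0 ->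
  f (P s (vscale t w)) <= Rmax (f (P s vzero)) (f (P s w)).
Proof.
move=> hw ht hb.
have hww := dot_ge0 w.
have := qconvex (psi := fun t => f (line (line xbar u s) w t)) (psi1 := fun t => dot (grad (line (line xbar u s) w t)) w)
  (psi2 := fun t => dot (mvmul (hess (line (line xbar u s) w t)) w) w) (a := 0) (b := 1) (t := t) ht
  (fun x _ => d1 _ w x) (fun x _ => d2 _ w x).
have -> : P s vzero = line (line xbar u s) w 0.
  by rewrite line0; apply: vext => i; rewrite /P /line /vadd /vscale /vzero; ring.
rewrite P_line_w -P_eq.
move=> H; apply: H => x hx.
have hin : vdist (line (line xbar u s) w x) xbar < th0.
  rewrite -P_line_w; apply: P_ball => //; first by rewrite dot_scalel hw; ring.
  rewrite dot_scalel dot_scaler.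
  have hx2 : x * x <= 1 by nra.
  have : x * (x * dot w w) <= dot w w.
    have -> : x * (x * dot w w) = (x * x) * dot w w by ring.
    have := Rmult_le_compat_r (dot w w) _ _ (dot_ge0 w) hx2; lra.
  lra.
have := hess_bounds w w hin.
have := Hpd hw; have := vnorm_sq w.
have := pos_INR n; intros; nra.
Qed.

Lemma norm_decomp y : dot (vsub y xbar) (vsub y xbar) = sc y * sc y + dot (wc y) (wc y).
Proof. by rewrite {1 2}(decomp y) P_sub pyth // wc_perp. Qed.

Variables (th ep s1 : R).
Hypothesis Hth : 0 < th <= th0.
Hypothesis Hep : 0 < ep.
Hypothesis Hs1 : 0 < s1.
Hypothesis Hs1a : lam / 4 * (s1 * s1) <= - ep.
Hypothesis Hs1b : (1 + Kc) * (s1 * s1) < th * th.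

Definition Sset := fun x => f x <= c - ep /\ open_ball xbar th x.

Lemma S_bound y : Sset y -> sc y * sc y + dot (wc y) (wc y) < th * th.
Proof.
move=> [_ hb]; have := ball_to (proj1 Hth) hb.
by rewrite {1 2}(decomp y) P_sub pyth // wc_perp.
Qed.

Lemma th_le : th * th <= th0 * th0.
Proof. case: Hth => h1 h2; nra. Qed.

Lemma S_nz y : Sset y -> sc y <> 0.
Proof.
move=> hS e.
have hb := S_bound hS; have hth := th_le.
have := key_nonneg (wc_perp y) ltac:(rewrite e in hb; lra).
rewrite -e -decomp.
case: hS => hf _; lra.
Qed.

Lemma S_w y : Sset y -> 0 <= sc y -> dot (wc y) (wc y) <= Kc * (sc y * sc y).
Proof.
move=> hS hs.
have hb := S_bound hS; have hth := th_le.
apply: key_bound => //.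
- exact: wc_perp.
- lra.
- rewrite -decomp; case: hS => hf _; lra.
Qed.

Lemma axis_S s : s1 <= s -> s * s < th * th -> Sset (line xbar u s).
Proof.
move=> h1 h2; split.
  have hs0 : s < th0.
    have := th_le; move=> h; apply: Rnot_le_lt => h'.
    have := Rmult_le_compat _ _ _ _ (Rlt_le _ _ Hth0) (Rlt_le _ _ Hth0) h' h'; lra.
  have := axis_upper (conj (Rlt_le _ _ (Rlt_le_trans _ _ _ Hs1 h1)) hs0).
  have : lam / 4 * (s * s) <= lam / 4 * (s1 * s1).
    apply: Rmult_le_compat_neg_l; first lra.
    apply: Rmult_le_compat; lra.
  lra.
rewrite /open_ball; apply: ball_of; first lra.
rewrite vsub_line dot_scalel dot_scaler Hu1; lra.
Qed.

Lemma connect y : Sset y -> 0 < sc y -> path_in Sset (line xbar u s1) y.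
Proof.
move=> hS hs.
have hw : dot (wc y) u = 0 := wc_perp y.
have hww := dot_ge0 (wc y).
have hb := S_bound hS.
have hK := S_w hS (Rlt_le _ _ hs).
set s := sc y in hs hb hK *; set w := wc y in hw hww hb hK *.
have hK1 := Kc_pos.
have hfy : f (P s w) <= c - ep by rewrite -decomp; case: hS.
set s' := Rmax s s1.
have hs's : s <= s' := Rmax_l _ _.
have hs's1 : s1 <= s' := Rmax_r _ _.
have hb' : s' * s' + dot w w < th * th.
  rewrite /s' /Rmax; case: Rle_dec => hh; last lra.
  have : dot w w <= Kc * (s1 * s1).
    apply: Rle_trans hK _; apply: Rmult_le_compat_l; [lra | apply: Rmult_le_compat; lra].
  lra.
have hb0 : s' * s' + dot w w < th0 * th0 by have := th_le; lra.
have seg1 : forall sg, s <= sg <= s' -> Sset (P sg w).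
  move=> sg hsg; split.
    have := concave_step hw (s := s) (sg := sg) ltac:(lra) ltac:(have : sg * sg <= s' * s' by nra; lra) ltac:(lra).
    lra.
  rewrite /open_ball; apply: P_ball => //; first lra.
  have hsg2 : sg * sg <= s' * s' by nra.
  lra.
have p3 : path_in Sset (P s' w) y.
  apply: seg_path => t ht.
  have -> : line (P s' w) (vsub y (P s' w)) t = P (s' + t * (s - s')) w.
    rewrite {1}(decomp y) -/s -/w.
    apply: vext => i; rewrite /P /line /vadd /vsub /vscale; ring.
  apply: seg1; nra.
have p2 : path_in Sset (line xbar u s') (P s' w).
  apply: seg_path => t ht.
  have -> : line (line xbar u s') (vsub (P s' w) (line xbar u s')) t = P s' (vscale t w).
    apply: vext => i; rewrite /P /line /vadd /vsub /vscale; ring.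
  split.
    apply: Rle_trans (convex_step hw ht hb0) _.
    apply: Rmax_lub.
      have -> : P s' vzero = line xbar u s'.
        apply: vext => i; rewrite /P /line /vadd /vscale /vzero; ring.
      have := axis_S hs's1 ltac:(have : 0 <= dot w w by []; lra).
      by case.
    by case: (seg1 s' ltac:(lra)).
  rewrite /open_ball; apply: P_ball => //; first lra.
    by rewrite dot_scalel hw; ring.
  rewrite dot_scalel dot_scaler.
  have hx2 : t * t <= 1 by nra.
  have : t * (t * dot w w) <= dot w w.
    have -> : t * (t * dot w w) = (t * t) * dot w w by ring.
    have := Rmult_le_compat_r (dot w w) _ _ (dot_ge0 w) hx2; lra.
  lra.
have p1 : path_in Sset (line xbar u s1) (line xbar u s').
  apply: seg_path => t ht.
  have -> : line (line xbar u s1) (vsub (line xbar u s') (line xbar u s1)) t = line xbar u (s1 + t * (s' - s1)).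
    apply: vext => i; rewrite /line /vadd /vsub /vscale; ring.
  apply: axis_S; first nra.
  have : (s1 + t * (s' - s1)) * (s1 + t * (s' - s1)) <= s' * s'.
    have : s1 + t * (s' - s1) <= s' by nra.
    have : 0 <= s1 + t * (s' - s1) by nra.
    intros; nra.
  lra.
exact: path_trans (path_trans p1 p2) p3.
Qed.

Lemma separation p q : path_in Sset p q -> 0 < sc p -> 0 < sc q.
Proof.
move=> hp h; apply: (path_ivt (S := Sset) (u := u) (o := xbar) Hu1 _ hp h).
move=> y hy; exact: S_nz.
Qed.

End Core.


Lemma f_econt n (f : vec n -> R) (grad : vec n -> vec n) :
  (forall y, has_gradient_at f y (grad y)) ->
  forall x e, 0 < e -> exists d, 0 < d /\ forall y, vdist y x < d -> Rabs (f y - f x) < e.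
Proof.
move=> Hg x e he.
have [d1 [hd1 Hd1]] := Hg x 1 ltac:(lra).
set K := vnorm (grad x) + 1.
have hK : 0 < K by rewrite /K; have := vnorm_ge0 (grad x); lra.
exists (Rmin d1 (e / (K + 1))); split; first by apply: Rmin_pos => //; apply: Rdiv_lt_0_compat; lra.
move=> y hy.
have hy1 : vnorm (vsub y x) < d1 by apply: Rlt_le_trans hy (Rmin_l _ _).
have hy2 : vnorm (vsub y x) < e / (K + 1) by apply: Rlt_le_trans hy (Rmin_r _ _).
have := Hd1 _ hy1.
have -> : vadd x (vsub y x) = y by apply: vext => i; rewrite /vadd /vsub; ring.
move=> H.
have hc := CS_abs (grad x) (vsub y x).
have hn := vnorm_ge0 (vsub y x).
have : Rabs (f y - f x) <= K * vnorm (vsub y x).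
  have := Rabs_triang (f y - f x - dot (grad x) (vsub y x)) (dot (grad x) (vsub y x)).
  have -> : f y - f x - dot (grad x) (vsub y x) + dot (grad x) (vsub y x) = f y - f x by ring.
  rewrite /K; lra.
have : K * vnorm (vsub y x) < K * (e / (K + 1)) by apply: Rmult_lt_compat_l.
have : K * (e / (K + 1)) < e.
  have -> : K * (e / (K + 1)) = e * (K / (K + 1)) by field; lra.
  have : K / (K + 1) < 1.
    apply: (Rmult_lt_reg_r (K + 1)); first lra.
    rewrite /Rdiv Rmult_assoc Rinv_l; lra.
  have : 0 < K / (K + 1) by apply: Rdiv_lt_0_compat; lra.
  intros; nra.
lra.
Qed.

Lemma Rabs0 x : Rabs x = 0 -> x = 0.
Proof. rewrite /Rabs; case: Rcase_abs => ? ?; lra. Qed.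

Definition vs2 {n} (a b : vec n) : 'I_2 -> vec n := fun i => if i == ord0 then a else b.

Lemma ord2_cases (i : 'I_2) : i = ord0 \/ i = lift ord0 ord0.
Proof.
case: i => [[|[|k]] hi]; [left | right | by []]; apply: val_inj => //.
Qed.

Lemma sum2 (F : 'I_2 -> R) : \big[Rplus/0]_(i < 2) F i = F ord0 + F (lift ord0 ord0).
Proof. by rewrite !big_ord_recl big_ord0 /= Rplus_0_r. Qed.

Section Eig.
Variables (n : nat) (H : mat n).
Hypothesis Hsym : forall a b, dot (mvmul H b) a = dot (mvmul H a) b.

Definition Q (w : vec n) := dot (mvmul H w) w.

Lemma Q_scale a w : Q (vscale a w) = a * a * Q w.
Proof. by rewrite /Q mvmul_scale dot_scalel dot_scaler; ring. Qed.

Lemma Q_line w z t : Q (vadd w (vscale t z)) = Q w + 2 * t * dot (mvmul H w) z + t * t * Q z.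
Proof.
rewrite /Q mvmul_add mvmul_scale !dot_addl !dot_addr !dot_scalel !dot_scaler.
rewrite (Hsym w z); ring.
Qed.

Lemma get_u : neg_eig_count_ge H 1 -> exists u lam, dot u u = 1 /\ mvmul H u = vscale lam u /\ lam < 0.
Proof.
move=> [vs [hli hev]].
have [lam [hl hv]] := hev ord0.
set v := vs ord0 in hv.
have hvv : 0 < dot v v.
  case: (Rle_lt_or_eq_dec _ _ (dot_ge0 v)) => // e.
  have v0 := dot_eq0 (esym e).
  have h1 : forall j, \big[Rplus/0]_(i < 1) ((fun _ => 1) i * vs i j) = 0.
    move=> j; rewrite big_ord_recl big_ord0 /= -/v v0 /vzero; ring.
  have := hli _ h1 ord0; rewrite /=; lra.
set k := / sqrt (dot v v).
have hs := sqrt_lt_R0 _ hvv.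
exists (vscale k v), lam; split; last split => //.
  rewrite dot_scalel dot_scaler /k.
  have := sqrt_sqrt _ (Rlt_le _ _ hvv).
  move=> h.
  transitivity (/ sqrt (dot v v) * / sqrt (dot v v) * (sqrt (dot v v) * sqrt (dot v v))).
    by rewrite h; ring.
  field; lra.
rewrite mvmul_scale hv; apply: vext => i; rewrite /vscale; ring.
Qed.

Lemma get_mu u lam : dot u u = 1 -> mvmul H u = vscale lam u -> lam < 0 ->
  invertible H -> ~ neg_eig_count_ge H 2 ->
  exists mu, 0 < mu /\ forall w, dot w u = 0 -> mu * dot w w <= dot (mvmul H w) w.
Proof.
move=> hu hHu hlam hinv hn2.
pose G := fun w : vec n => Rmax (Rabs (dot w w - 1)) (Rabs (dot w u)).
have hG : forall w, G w <= 0 <-> dot w w = 1 /\ dot w u = 0.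
  move=> w; rewrite /G; split.
    move=> h; have h1 := Rle_trans _ _ _ (Rmax_l _ _) h; have h2 := Rle_trans _ _ _ (Rmax_r _ _) h.
    have := Rabs_pos (dot w w - 1); have := Rabs_pos (dot w u).
    move=> a1 a2; split.
      have : Rabs (dot w w - 1) = 0 by lra.
      move/Rabs0; lra.
    have : Rabs (dot w u) = 0 by lra.
    by move/Rabs0.
  move=> [-> ->]; rewrite Rminus_eq_0 Rabs_R0; apply: Rmax_lub; lra.
have cdot : forall a : vec n, ccont (fun w : vec n => dot w a).
  move=> a; rewrite /dot; apply: ccont_bigsum => i.
  exact: ccont_mul (ccont_coord i) (ccont_const (a i)).
have cG : ccont G.
  apply: ccont_max; apply: ccont_abs.
    have : ccont (fun w : vec n => \big[Rplus/0]_(i < n) (w i * w i) - 1).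
      apply: ccont_sub (ccont_const 1); apply: ccont_bigsum => i.
      exact: ccont_mul (ccont_coord i) (ccont_coord i).
    by [].
  exact: cdot.
have cQ : ccont Q.
  rewrite /Q /dot /mvmul; apply: ccont_bigsum => i.
  apply: ccont_mul (ccont_coord i); apply: ccont_bigsum => j.
  exact: ccont_mul (ccont_const _) (ccont_coord j).
have extend : forall m, (forall w, G w <= 0 -> m <= Q w) -> forall w, dot w u = 0 -> m * dot w w <= Q w.
  move=> m hm w hw.
  case: (Rle_lt_or_eq_dec _ _ (dot_ge0 w)) => hww; last first.
    rewrite -hww (dot_eq0 (esym hww)) /Q mvmul_zero dot_zerol; lra.
  set k := / sqrt (dot w w).
  have hs := sqrt_lt_R0 _ hww.
  have hss := sqrt_sqrt _ (Rlt_le _ _ hww).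
  have hkk : k * k * dot w w = 1.
    rewrite /k; transitivity (/ sqrt (dot w w) * / sqrt (dot w w) * (sqrt (dot w w) * sqrt (dot w w))).
      by rewrite hss.
    field; lra.
  have hGk : G (vscale k w) <= 0.
    apply/hG; rewrite !dot_scalel !dot_scaler hw; split; [rewrite -hkk; ring | ring].
  have := hm _ hGk.
  rewrite Q_scale => h.
  have := Rmult_le_compat_r (dot w w) _ _ (dot_ge0 w) h.
  have -> : k * k * Q w * dot w w = (k * k * dot w w) * Q w by ring.
  rewrite hkk; lra.
case: (EM (exists w, G w <= 0)) => [hne|hemp]; last first.
  exists 1; split; first lra.
  move=> w hw; apply: (extend 1) => // z hz; exfalso; apply: hemp; by exists z.
have hbd : exists M, forall z, G z <= 0 -> forall i, Rabs (z i) <= M.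
  exists 1 => z /hG [h1 _] i.
  apply: Rle_trans (vnorm_coord z i) _; rewrite /vnorm h1 sqrt_1; lra.
have [w0 [hw0 hmin]] := min_attained cQ cG hne hbd.
have [hw01 hw0u] := (hG w0).1 hw0.
set m := Q w0.
have ext := extend m hmin.
(* Lagrange *)
have lag : forall z, dot z u = 0 -> dot (mvmul H w0) z - m * dot w0 z = 0.
  move=> z hz.
  set A := dot (mvmul H w0) z - m * dot w0 z.
  set B := Q z - m * dot z z.
  have key : forall t, 0 <= 2 * t * A + t * t * B.
    move=> t.
    have hyu : dot (vadd w0 (vscale t z)) u = 0 by rewrite dot_addl dot_scalel hw0u hz; ring.
    have := ext _ hyu.
    rewrite Q_line !dot_addl !dot_addr !dot_scalel !dot_scaler hw01 (dot_comm z w0) /A /B /m; intros; nra.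
  set K := Rabs B + 1.
  have hK : 0 < K by rewrite /K; have := Rabs_pos B; lra.
  have := key (- A / K).
  have hB := Rle_abs B.
  have -> : 2 * (- A / K) * A + - A / K * (- A / K) * B = (A * A / K) * (- 2 + B / K) by field; lra.
  have hBK : B / K < 1.
    apply: (Rmult_lt_reg_r K) => //; rewrite /Rdiv Rmult_assoc Rinv_l; [rewrite /K; lra | lra].
  have hAA : 0 <= A * A / K by apply: Rdiv_le_0_compat; nra.
  move=> h.
  have hA0 : A * A / K <= 0 by nra.
  have : A * A = 0.
    have := Rmult_le_compat_r K _ _ (Rlt_le _ _ hK) hA0.
    rewrite /Rdiv Rmult_assoc Rinv_l; nra.
  nra.
set r := vsub (mvmul H w0) (vscale m w0).
have hru : dot r u = 0.
  rewrite /r dot_subl dot_scalel hw0u Hsym hHu dot_scalel (dot_comm u w0) hw0u; ring.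
have hr : r = vzero.
  apply: dot_eq0; have := lag r hru.
  by rewrite {2}/r dot_subl dot_scalel.
have heig : mvmul H w0 = vscale m w0.
  apply: vext => i; have := congr1 (fun v => v i) hr; rewrite /r /vsub /vzero /=; lra.
exists m; split => //.
case: (Rtotal_order m 0) => [hneg|[hz|//]].
  exfalso; apply: hn2.
  exists (vs2 u w0); split.
    move=> cc hc.
    have hv : forall j, cc ord0 * u j + cc (lift ord0 ord0) * w0 j = 0.
      by move=> j; have := hc j; rewrite sum2 /vs2 /=.
    pose V := fun j => cc ord0 * u j + cc (lift ord0 ord0) * w0 j.
    have hV : V = vzero by apply: vext => j; exact: hv.
    have e1 : dot V u = 0 by rewrite hV dot_zerol.
    have e2 : dot V w0 = 0 by rewrite hV dot_zerol.
    have EV : V = vadd (vscale (cc ord0) u) (vscale (cc (lift ord0 ord0)) w0) by [].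
    rewrite EV in e1 e2.
    move: e1 e2; rewrite !dot_addl !dot_scalel hu hw0u (dot_comm u w0) hw0u hw01 => e1 e2.
    move=> i; case: (ord2_cases i) => ->; lra.
  move=> i; case: (ord2_cases i) => -> /=.
    by exists lam.
  by exists m.
exfalso.
have : w0 = vzero.
  apply: (invertible_ker hinv); rewrite heig hz; apply: vext => i; rewrite /vscale /vzero; ring.
move=> e; move: hw01; rewrite e dot_zerol; lra.
Qed.

End Eig.


Definition lft {n} (z : vec (n + n)) : vec n := fun j => z (lshift n j).
Definition rgt {n} (z : vec (n + n)) : vec n := fun j => z (rshift n j).
Definition vpair {n} (x y : vec n) : vec (n + n) :=
  fun i => match fintype.split i with inl j => x j | inr j => y j end.

Lemma lft_pair n (x y : vec n) : lft (vpair x y) = x.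
Proof. apply: vext => j; rewrite /lft /vpair -[lshift n j]/(fintype.unsplit (inl j)) fintype.unsplitK //. Qed.

Lemma rgt_pair n (x y : vec n) : rgt (vpair x y) = y.
Proof. apply: vext => j; rewrite /rgt /vpair -[rshift n j]/(fintype.unsplit (inr j)) fintype.unsplitK //. Qed.

Lemma ccont_lft n (F : vec n -> R) : ccont F -> ccont (fun z : vec (n + n) => F (lft z)).
Proof.
move=> h x e he; have [d [hd Hd]] := h (lft x) e he; exists d; split => // y hy.
apply: Hd => j; exact: hy.
Qed.

Lemma ccont_rgt n (F : vec n -> R) : ccont F -> ccont (fun z : vec (n + n) => F (rgt z)).
Proof.
move=> h x e he; have [d [hd Hd]] := h (rgt x) e he; exists d; split => // y hy.
apply: Hd => j; exact: hy.
Qed.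

Lemma ccont_dotsub n (a b : vec n) : ccont (fun w : vec n => dot (vsub w a) b).
Proof.
rewrite /dot; apply: ccont_bigsum => i.
apply: ccont_mul (ccont_const _); exact: ccont_sub (ccont_coord i) (ccont_const _).
Qed.

Lemma ccont_dotsub2 n (a : vec n) : ccont (fun w : vec n => dot (vsub w a) (vsub w a)).
Proof.
rewrite /dot; apply: ccont_bigsum => i.
by apply: ccont_mul; apply: ccont_sub (ccont_coord i) (ccont_const _).
Qed.

Lemma ccont_Fd n : ccont (fun z : vec (n + n) => dot (vsub (lft z) (rgt z)) (vsub (lft z) (rgt z))).
Proof.
rewrite /dot; apply: ccont_bigsum => i.
by apply: ccont_mul; apply: ccont_sub; apply: ccont_coord.
Qed.

Lemma path_ends n (S : vec n -> Prop) p q : path_in S p q -> S p /\ S q.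
Proof.
move=> [g [g0 [g1 [gS _]]]]; split; [rewrite -g0 | rewrite -g1]; apply: gS; lra.
Qed.

Lemma Rmax_le0 a b : Rmax a b <= 0 <-> a <= 0 /\ b <= 0.
Proof.
split; first by move=> h; split; [apply: Rle_trans (Rmax_l _ _) h | apply: Rle_trans (Rmax_r _ _) h].
by move=> [h1 h2]; apply: Rmax_lub.
Qed.

Theorem proposition4p1 (n : nat) (f : vec n -> R) (grad : vec n -> vec n)
    (hess : vec n -> mat n) (xbar : vec n) (c : R) :
  C2_with f grad hess ->
  grad xbar = vzero ->
  invertible (hess xbar) ->
  morse_index (hess xbar) 1 ->
  f xbar = c ->
  exists theta0, 0 < theta0 /\
    forall theta, 0 < theta < theta0 ->
      exists eps0, 0 < eps0 /\
        forall eps, 0 < eps < eps0 ->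
          let S := fun x => f x <= c - eps /\ open_ball xbar theta x in
          exactly_two_path_components S /\
          exists xt yt, S xt /\ S yt /\ ~ path_in S xt yt /\
            set_distance (path_component S xt) (path_component S yt) (vdist xt yt).
Proof.
move=> HC2 Hg0 Hinv [Hm1 Hm2] Hfc.
have Hsym : forall a b, dot (mvmul (hess xbar) b) a = dot (mvmul (hess xbar) a) b.
  exact: (hess_sym HC2 xbar).
have [u [lam [Hu1 [Hu Hlam]]]] := get_u Hm1.
have [mu [Hmu Hpd]] := get_mu Hsym Hu1 Hu Hlam Hinv Hm2.
have Hgr : forall y, has_gradient_at f y (grad y) by case: HC2.
set mn := Rmin (- lam / 2) (mu / 8).
have hmn : 0 < mn by apply: Rmin_pos; lra.
have hN := pos_INR n.
set eta := mn / (INR n + 1).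
have Heta : 0 < eta by apply: Rdiv_lt_0_compat; lra.
have HeN : eta * INR n <= mn.
  rewrite /eta.
  have -> : mn / (INR n + 1) * INR n = mn * (INR n / (INR n + 1)) by field; lra.
  have : INR n / (INR n + 1) <= 1.
    apply: (Rmult_le_reg_r (INR n + 1)); first lra.
    rewrite /Rdiv Rmult_assoc Rinv_l; lra.
  have : 0 <= INR n / (INR n + 1) by apply: Rdiv_le_0_compat; lra.
  intros; nra.
have HeN1 : eta * INR n <= - lam / 2 by apply: Rle_trans HeN (Rmin_l _ _).
have HeN2 : eta * INR n <= mu / 8 by apply: Rle_trans HeN (Rmin_r _ _).
have [th0 [Hth0 Hball]] := (proj2 (proj2 HC2)) xbar eta Heta.
set u' := vscale (-1) u.
have Hu1' : dot u' u' = 1 by rewrite /u' dot_scalel dot_scaler Hu1; ring.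
have Hu' : mvmul (hess xbar) u' = vscale lam u'.
  rewrite /u' mvmul_scale Hu; apply: vext => i; rewrite /vscale; ring.
have Hpd' : forall w, dot w u' = 0 -> mu * dot w w <= dot (mvmul (hess xbar) w) w.
  move=> w hw; apply: Hpd; move: hw; rewrite /u' dot_scaler; lra.
have sc' : forall y, sc xbar u' y = - sc xbar u y.
  by move=> y; rewrite /sc /u' dot_scaler; ring.
have scl : forall s, sc xbar u (line xbar u s) = s.
  by move=> s; rewrite /sc vsub_line dot_scalel Hu1; ring.
exists th0; split => // th [Hth Hth'].
have HthB : 0 < th <= th0 by lra.
set K := Kc lam mu.
have hK : 1 <= K := Kc_pos Hlam Hmu.
set L := - lam.
have hL : 0 < L by rewrite /L; lra.
exists (L * (th * th) / (64 * (1 + K))); split.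
  apply: Rdiv_lt_0_compat; [apply: Rmult_lt_0_compat => //; apply: Rmult_lt_0_compat => // | lra].
move=> ep [Hep Hep0].
set s1 := sqrt (4 * ep / L).
have h4 : 0 < 4 * ep / L by apply: Rdiv_lt_0_compat; lra.
have hs1sq : s1 * s1 = 4 * ep / L by apply: sqrt_sqrt; lra.
have Hs1 : 0 < s1 by apply: sqrt_lt_R0.
have Hs1a : lam / 4 * (s1 * s1) <= - ep by rewrite hs1sq /L; right; field; lra.
have Hs1c : 16 * (1 + K) * (s1 * s1) < th * th.
  rewrite hs1sq.
  have := Rmult_lt_compat_l (64 * (1 + K) / L) _ _ ltac:(apply: Rdiv_lt_0_compat; lra) Hep0.
  have -> : 64 * (1 + K) / L * (L * (th * th) / (64 * (1 + K))) = th * th by field; lra.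
  have -> : 16 * (1 + K) * (4 * ep / L) = 64 * (1 + K) / L * ep by field; lra.
  done.
have hs1s : 0 < s1 * s1 by nra.
have Hs1b : (1 + K) * (s1 * s1) < th * th by nra.
have hs1th : s1 * s1 < th * th by nra.
move=> S.
have ES : S = Sset f xbar c th ep by [].
rewrite ES; clear S ES.
set a := line xbar u s1.
set b := line xbar u' s1.
have Sa : Sset f xbar c th ep a :=
  axis_S HC2 Hg0 Hfc Hu1 Hu Hlam HeN1 Hth0 Hball HthB Hs1 Hs1a (Rle_refl s1) hs1th.
have Sb : Sset f xbar c th ep b :=
  axis_S HC2 Hg0 Hfc Hu1' Hu' Hlam HeN1 Hth0 Hball HthB Hs1 Hs1a (Rle_refl s1) hs1th.
have sca : sc xbar u a = s1 by rewrite /a scl.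
have scb : sc xbar u b = - s1 by rewrite -[LHS]Ropp_involutive -sc' /b /sc vsub_line dot_scalel Hu1'; ring.
have sep := separation HC2 Hg0 Hfc Hu1 Hu Hmu Hpd HeN1 HeN2 Hth0 Hball HthB Hep.
have sep' := separation HC2 Hg0 Hfc Hu1' Hu' Hmu Hpd' HeN1 HeN2 Hth0 Hball HthB Hep.
have nz := S_nz HC2 Hg0 Hfc Hu1 Hu Hmu Hpd HeN1 HeN2 Hth0 Hball HthB Hep.
have con := connect HC2 Hg0 Hfc Hu1 Hu Hlam Hmu Hpd Heta HeN1 HeN2 Hth0 Hball HthB Hep Hs1 Hs1a Hs1b.
have con' := connect HC2 Hg0 Hfc Hu1' Hu' Hlam Hmu Hpd' Heta HeN1 HeN2 Hth0 Hball HthB Hep Hs1 Hs1a Hs1b.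
have Sw := S_w HC2 Hg0 Hfc Hu1 Hu Hlam Hmu Hpd Heta HeN1 HeN2 Hth0 Hball HthB Hep.
have Sw' := S_w HC2 Hg0 Hfc Hu1' Hu' Hlam Hmu Hpd' Heta HeN1 HeN2 Hth0 Hball HthB Hep.
split.
  exists a, b; split => //; split => //; split.
    move=> hp; have := sep _ _ hp ltac:(rewrite sca; lra); rewrite scb; lra.
  move=> x hx.
  case: (Rtotal_order (sc xbar u x) 0) => [hneg|[hz|hpos]].
  - right; apply: con'; first done; rewrite sc'; lra.
  - by exfalso; apply: (nz x hx).
  - left; exact: con.

pose Fd := fun z : vec (n + n) => dot (vsub (lft z) (rgt z)) (vsub (lft z) (rgt z)).
pose Gd := fun z : vec (n + n) =>
  Rmax (Rmax (f (lft z) - (c - ep)) (f (rgt z) - (c - ep)))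
    (Rmax (Rmax (- sc xbar u (lft z)) (sc xbar u (rgt z)))
      (Rmax (dot (vsub (lft z) xbar) (vsub (lft z) xbar) - th * th / 4)
            (dot (vsub (rgt z) xbar) (vsub (rgt z) xbar) - th * th / 4))).
have hGd : forall z, Gd z <= 0 <->
   (f (lft z) <= c - ep /\ f (rgt z) <= c - ep) /\
   ((0 <= sc xbar u (lft z) /\ sc xbar u (rgt z) <= 0) /\
    (dot (vsub (lft z) xbar) (vsub (lft z) xbar) <= th * th / 4 /\
     dot (vsub (rgt z) xbar) (vsub (rgt z) xbar) <= th * th / 4)).
  move=> z; rewrite /Gd !Rmax_le0; lra.
have cf : ccont f := ccont_of_econt (f_econt Hgr).
have cFd : ccont Fd := @ccont_Fd n.
have cGd : ccont Gd.
  rewrite /Gd; apply: ccont_max; apply: ccont_max.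
  - exact: ccont_sub (ccont_lft cf) (ccont_const _).
  - exact: ccont_sub (ccont_rgt cf) (ccont_const _).
  - apply: ccont_max; first apply: ccont_opp; [exact: ccont_lft (ccont_dotsub xbar u) | exact: ccont_rgt (ccont_dotsub xbar u)].
  - apply: ccont_max; apply: ccont_sub (ccont_const _); [exact: ccont_lft (ccont_dotsub2 xbar) | exact: ccont_rgt (ccont_dotsub2 xbar)].
have hbn : forall v : vec n, dot v v <= th * th / 4 -> vnorm v <= th / 2.
  move=> v hv; apply/vnorm_le; lra.
have hne : exists z, Gd z <= 0.
  exists (vpair a b); apply/hGd; rewrite lft_pair rgt_pair sca scb.
  have da : dot (vsub a xbar) (vsub a xbar) = s1 * s1 by rewrite /a vsub_line dot_scalel dot_scaler Hu1; ring.
  have db : dot (vsub b xbar) (vsub b xbar) = s1 * s1 by rewrite /b vsub_line dot_scalel dot_scaler Hu1'; ring.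
  rewrite da db.
  case: Sa => fa _; case: Sb => fb _.
  split; [split => // | split; [split; lra | split; nra]].
have hbd : exists M, forall z, Gd z <= 0 -> forall i, Rabs (z i) <= M.
  exists (vnorm xbar + th / 2) => z /hGd [_ [_ [h1 h2]]] i.
  have key : forall v : vec n, dot (vsub v xbar) (vsub v xbar) <= th * th / 4 -> forall j, Rabs (v j) <= vnorm xbar + th / 2.
    move=> v hv j.
    have := vnorm_coord (vsub v xbar) j; have := vnorm_coord xbar j; have := hbn _ hv.
    rewrite /vsub; have := Rabs_triang (v j - xbar j) (xbar j).
    have -> : v j - xbar j + xbar j = v j by ring.
    lra.
  case E: (fintype.split i) => [j|j].
  - have -> : i = lshift n j by rewrite -(fintype.splitK i) E.
    exact: (key (lft z) h1 j).
  - have -> : i = rshift n j by rewrite -(fintype.splitK i) E.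
    exact: (key (rgt z) h2 j).
have [zs [hzs hmin]] := min_attained cFd cGd hne hbd.
move/hGd: hzs => [[fx fy] [[sx sy] [bx by']]].
set xt := lft zs in fx sx bx hmin *.
set yt := rgt zs in fy sy by' hmin *.
have hth2 : th * th / 4 < th * th by nra.
have Sxt : Sset f xbar c th ep xt.
  split => //; rewrite /open_ball; apply: ball_of; lra.
have Syt : Sset f xbar c th ep yt.
  split => //; rewrite /open_ball; apply: ball_of; lra.
have sxt : 0 < sc xbar u xt.
  case: (Rle_lt_or_eq_dec _ _ sx) => // e; exfalso; exact: (nz _ Sxt (esym e)).
have syt : sc xbar u yt < 0.
  case: (Rle_lt_or_eq_dec _ _ sy) => // e; exfalso; exact: (nz _ Syt e).
have syt' : 0 < sc xbar u' yt by rewrite sc'; lra.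
exists xt, yt; split => //; split => //; split.
  move=> hp; have := sep _ _ hp sxt; lra.
split; last first.
  move=> d' hd'; apply: hd'; split => //; exact: path_refl.
move=> a' b' [_ ha] [_ hb].
have [_ Sa'] := path_ends ha.
have [_ Sb'] := path_ends hb.
have sa' : 0 < sc xbar u a' := sep _ _ ha sxt.
have sb' : 0 < sc xbar u' b' := sep' _ _ hb syt'.
rewrite sc' in sb'.
suff : Fd zs <= dot (vsub a' b') (vsub a' b').
  by move=> h; rewrite /vdist /vnorm; apply: sqrt_le_1_alt.
set D := dot (vsub a' b') (vsub a' b').
have hD := dot_ge0 (vsub a' b').
case: (Rle_lt_dec (4 * (s1 * s1)) D) => hDc.
  apply: Rle_trans (hmin (vpair a b) _) _.
    apply/hGd; rewrite lft_pair rgt_pair sca scb.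
    have da : dot (vsub a xbar) (vsub a xbar) = s1 * s1 by rewrite /a vsub_line dot_scalel dot_scaler Hu1; ring.
    have db : dot (vsub b xbar) (vsub b xbar) = s1 * s1 by rewrite /b vsub_line dot_scalel dot_scaler Hu1'; ring.
    rewrite da db.
    case: Sa => fa _; case: Sb => fb _.
    split; [split => // | split; [split; lra | split; nra]].
  rewrite /Fd lft_pair rgt_pair.
  have -> : vsub a b = vscale (2 * s1) u.
    by apply: vext => i; rewrite /a /b /u' /line /vsub /vadd /vscale; ring.
  rewrite dot_scalel dot_scaler Hu1; lra.
suff hG : Gd (vpair a' b') <= 0.
  by have := hmin _ hG; rewrite {2}/Fd lft_pair rgt_pair -/D.
apply/hGd; rewrite lft_pair rgt_pair.
have hcs : (sc xbar u a' - sc xbar u b') * (sc xbar u a' - sc xbar u b') <= D.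
  have -> : sc xbar u a' - sc xbar u b' = dot (vsub a' b') u.
    by rewrite /sc -dot_subl; f_equal; apply: vext => i; rewrite /vsub; ring.
  have := CS (vsub a' b') u; rewrite Hu1 -/D; lra.
have ha2 : sc xbar u a' * sc xbar u a' <= D by nra.
have hb2 : sc xbar u b' * sc xbar u b' <= D by nra.
have na := norm_decomp xbar Hu1 a'.
have nb := norm_decomp xbar Hu1' b'.
have wa := Sw _ Sa' (Rlt_le _ _ sa').
have wb := Sw' _ Sb' ltac:(rewrite sc'; lra).
rewrite sc' in nb wb.
case: Sa' => fa' _; case: Sb' => fb' _.
split; first by split.
split; first by split; lra.
rewrite -/K in wa wb.
have e3 : 16 * (1 + K) * (s1 * s1) = 4 * ((1 + K) * (4 * (s1 * s1))) by ring.
split.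
  rewrite na.
  have : (1 + K) * (sc xbar u a' * sc xbar u a') <= (1 + K) * (4 * (s1 * s1)) by apply: Rmult_le_compat_l; lra.
  have e1 : (1 + K) * (sc xbar u a' * sc xbar u a') = sc xbar u a' * sc xbar u a' + K * (sc xbar u a' * sc xbar u a') by ring.
  lra.
rewrite nb.
have : (1 + K) * (- sc xbar u b' * - sc xbar u b') <= (1 + K) * (4 * (s1 * s1)).
  apply: Rmult_le_compat_l; first lra.
  have -> : - sc xbar u b' * - sc xbar u b' = sc xbar u b' * sc xbar u b' by ring.
  lra.
have e1 : (1 + K) * (- sc xbar u b' * - sc xbar u b') = - sc xbar u b' * - sc xbar u b' + K * (- sc xbar u b' * - sc xbar u b') by ring.
lra.
Qed.
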